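(* The following are equivalent for any complete theory $T$. (1) $T$ locally trace defines every structure. (2) $T$ is $\infty$-$\mathrm{IP}$. (3) $T$ trace defines the generic $k$-hypergraph $\mathcal{H}_k$ for every $k\ge 2$.
   Context: ''Definable'' means first-order definable with parameters. A $k$-hypergraph is a set with a symmetric $k$-ary relation $E$ such that $E(a_1,\dots,a_k)$ implies the $a_i$ are distinct; $\mathcal{H}_k$ is the Fraïssé limit of the class of finite $k$-hypergraphs. A formula $\varphi(x;y_1,\dots,y_k)$ has the $k$-independence property in a model if there are sequences $(b_{1,i})_{i<\omega},\dots,(b_{k,i})_{i<\omega}$ such that for every $S\subseteq\omega^k$ there is $a_S$ with $\varphi(a_S;b_{1,i_1},\dots,b_{k,i_k})$ holding iff $(i_1,\dots,i_k)\in S$. $T$ is $k$-$\mathrm{NIP}$ if no formula has the $k$-independence property in a model of $T$, $k$-$\mathrm{IP}$ otherwise; $T$ is $\infty$-$\mathrm{IP}$ if it is $k$-$\mathrm{IP}$ for every $k\ge1$. A structure $\mathcal{N}$ trace defines $\mathcal{M}$ if for some $n$ there is $\tau\colon M\to N^n$ such that every $\mathcal{M}$-definable $X\subseteq M^m$ equals $\tau^{-1}(Y)$ for some $\mathcal{N}$-definable $Y\subseteq N^{mn}$. $\mathcal{N}$ locally trace defines $\mathcal{M}$ if there is a possibly infinite collection $\mathcal{E}$ of functions $M\to N$ such that every $\mathcal{M}$-definable subset of $M^m$ is of the form $\{(a_1,\dots,a_m):(f_1(a_{i_1}),\dots,f_n(a_{i_n}))\in Y\}$ with $f_j\in\mathcal{E}$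 and $Y$ $\mathcal{N}$-definable. A theory (locally) trace defines a structure if some model of it does. *)

(* Defs.v *)
From mathcomp Require Import all_boot.
From mathcomp Require Import fingroup perm.
Set Implicit Arguments. Unset Strict Implicit. Unset Printing Implicit Defensive.

Record signature := Signature {
  fsym : Type; farity : fsym -> nat;
  rsym : Type; rarity : rsym -> nat }.

Record structure (L : signature) := Structure {
  carrier :> Type;
  carrier_inhabited : inhabited carrier;
  fun_interp : forall f : fsym L, ('I_(farity f) -> carrier) -> carrier;
  rel_interp : forall r : rsym L, ('I_(rarity r) -> carrier) -> Prop }.

Inductive term (L : signature) : Type :=
| tvar : nat -> term L
| tapp : forall f : fsym L, ('I_(farity f) -> term L) -> term L.

Inductive formula (L : signature) : Type :=
| fequal : term L -> term L -> formula L
| frel : forall r : rsym L, ('I_(rarity r) -> term L) -> formula L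
| fneg : formula L -> formula L
| fand : formula L -> formula L -> formula L
| fexists : nat -> formula L -> formula L.

Fixpoint eval_term (L : signature) (M : structure L) (e : nat -> M) (t : term L) : M :=
  match t with
  | tvar i => e i
  | tapp f ts => @fun_interp L M f (fun j => eval_term e (ts j))
  end.

Definition upd (T : Type) (e : nat -> T) (x : nat) (v : T) : nat -> T :=
  fun i => if i == x then v else e i.

Fixpoint sat (L : signature) (M : structure L) (e : nat -> M) (phi : formula L) : Prop :=
  match phi with
  | fequal t u => eval_term e t = eval_term e u
  | frel r ts => @rel_interp L M r (fun j => eval_term e (ts j))
  | fneg p => ~ sat e p
  | fand p q => sat e p /\ sat e q
  | fexists x p => exists v : M, sat (upd e x v) p
  end.

Fixpoint occurs_term (L : signature) (v : nat) (t : term L) : Prop :=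
  match t with
  | tvar i => i = v
  | tapp f ts => exists j, occurs_term v (ts j)
  end.

Fixpoint free_in (L : signature) (v : nat) (phi : formula L) : Prop :=
  match phi with
  | fequal t u => occurs_term v t \/ occurs_term v u
  | frel r ts => exists j, occurs_term v (ts j)
  | fneg p => free_in v p
  | fand p q => free_in v p \/ free_in v q
  | fexists x p => v <> x /\ free_in v p
  end.

Definition sentence (L : signature) (phi : formula L) : Prop :=
  forall v, ~ free_in v phi.

Definition theory (L : signature) := formula L -> Prop.

Definition model (L : signature) (T : theory L) (M : structure L) : Prop :=
  forall phi, T phi -> forall e : nat -> M, sat e phi.

Definition complete_theory (L : signature) (T : theory L) : Prop :=
  (forall phi, T phi -> sentence phi) /\
  (exists M : structure L, model T M) /\
  (forall phi, sentence phi ->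
     (forall M : structure L, model T M -> forall e : nat -> M, sat e phi) \/
     (forall M : structure L, model T M -> forall e : nat -> M, sat e (fneg phi))).

(* A tuple a indexed by a finite type I is plugged into the variables
   0 .. #|I|-1 (via the enumeration of I); all other variables receive
   parameter values from e. *)
Definition tuple_env (L : signature) (M : structure L) (I : finType)
  (a : I -> M) (e : nat -> M) : nat -> M :=
  fun i => match (insub i : option 'I_#|I|) with
           | Some j => a (enum_val j)
           | None => e i
           end.

Definition definable (L : signature) (M : structure L) (I : finType)
  (X : (I -> M) -> Prop) : Prop :=
  exists (phi : formula L) (e : nat -> M),
    forall a : I -> M, X a <-> sat (tuple_env a e) phi.

(* N^{m n} is indexed by 'I_m * 'I_n: coordinate (i,j) of tau(a) is tau(a_i)_j *)
Definition trace_defines (L L' : signature) (N : structure L) (M : structure L') : Prop :=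
  exists (n : nat) (tau : M -> 'I_n -> N),
    forall (m : nat) (X : ('I_m -> M) -> Prop), definable X ->
      exists Y : ('I_m * 'I_n -> N) -> Prop,
        definable Y /\ forall a : 'I_m -> M, X a <-> Y (fun p => tau (a p.1) p.2).

Definition locally_trace_defines (L L' : signature) (N : structure L) (M : structure L') : Prop :=
  exists E : (M -> N) -> Prop,
    forall (m : nat) (X : ('I_m -> M) -> Prop), definable X ->
      exists (n : nat) (f : 'I_n -> M -> N) (idx : 'I_n -> 'I_m) (Y : ('I_n -> N) -> Prop),
        (forall j, E (f j)) /\ definable Y /\
        forall a : 'I_m -> M, X a <-> Y (fun j => f j (a (idx j))).

Definition theory_trace_defines (L L' : signature) (T : theory L) (M : structure L') : Prop :=
  exists N : structure L, model T N /\ trace_defines N M.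

Definition theory_locally_trace_defines (L L' : signature) (T : theory L) (M : structure L') : Prop :=
  exists N : structure L, model T N /\ locally_trace_defines N M.

(* phi(x; y_1, ..., y_k): x is the tuple of variables vx, y_i the tuple vy i;
   all these variables are pairwise distinct and contain the free variables of phi. *)
Definition has_kIP (L : signature) (M : structure L) (k : nat) (phi : formula L) : Prop :=
  exists (nx : nat) (ny : 'I_k -> nat) (vx : 'I_nx -> nat)
         (vy : forall i : 'I_k, 'I_(ny i) -> nat),
    injective vx /\ (forall i, injective (vy i)) /\
    (forall j i j', vx j <> vy i j') /\
    (forall i i' j j', i <> i' -> vy i j <> vy i' j') /\
    (forall v, free_in v phi -> (exists j, v = vx j) \/ (exists i j, v = vy i j)) /\
    exists b : forall i : 'I_k, nat -> 'I_(ny i) -> M,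
      forall S : ('I_k -> nat) -> Prop,
        exists a : 'I_nx -> M,
          forall (s : 'I_k -> nat) (e : nat -> M),
            (forall j, e (vx j) = a j) ->
            (forall i j, e (vy i j) = b i (s i) j) ->
            (sat e phi <-> S s).

Definition k_IP (L : signature) (T : theory L) (k : nat) : Prop :=
  exists (M : structure L) (phi : formula L), model T M /\ has_kIP M k phi.

Definition infinite_IP (L : signature) (T : theory L) : Prop :=
  forall k, 1 <= k -> k_IP T k.

Fixpoint in_list (T : Type) (x : T) (s : seq T) : Prop :=
  match s with [::] => False | y :: s' => y = x \/ in_list x s' end.

Definition hypergraph_sig (k : nat) : signature :=
  {| fsym := Empty_set; farity := fun _ => 0; rsym := unit; rarity := fun _ => k |}.

Definition hedge (k : nat) (H : structure (hypergraph_sig k)) (a : 'I_k -> H) : Prop :=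
  @rel_interp (hypergraph_sig k) H tt a.
Arguments hedge {k} H a.

Definition is_khypergraph (k : nat) (V : Type) (R : ('I_k -> V) -> Prop) : Prop :=
  (forall a, R a -> injective a) /\
  (forall a (s : {perm 'I_k}), R a -> R (a \o s)).

(* Fraisse limit of the class of finite k-hypergraphs: a countable
   k-hypergraph whose age is exactly the class of finite k-hypergraphs
   (its finite substructures are k-hypergraphs since it is one, and every
   finite k-hypergraph embeds) and which is ultrahomogeneous. *)
Definition generic_hypergraph (k : nat) (H : structure (hypergraph_sig k)) : Prop :=
  is_khypergraph (hedge H) /\
  (exists f : H -> nat, injective f) /\
  (forall (V : finType) (R : ('I_k -> V) -> Prop), is_khypergraph R ->
     exists g : V -> H, injective g /\ forall a, R a <-> hedge H (g \o a)) /\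
  (forall (A : H -> Prop) (p : H -> H),
     (exists s : list H, forall x, A x <-> in_list x s) ->
     (forall x y, A x -> A y -> p x = p y -> x = y) ->
     (forall a : 'I_k -> H, (forall j, A (a j)) -> (hedge H a <-> hedge H (p \o a))) ->
     exists sigma : H -> H, bijective sigma /\ (forall x, A x -> sigma x = p x) /\
       forall a : 'I_k -> H, hedge H a <-> hedge H (sigma \o a)).

(* Main.v *)
Require Import Defs.
From mathcomp Require Import all_boot.
From mathcomp Require Import fingroup perm.
From mathcomp Require classical_sets filter.
From Stdlib Require Import FunctionalExtensionality PropExtensionality ClassicalEpsilon ProofIrrelevance Eqdep.
Set Implicit Arguments. Unset Strict Implicit. Unset Printing Implicit Defensive.

Record ultra (T : Type) (U : (T -> Prop) -> Prop) : Prop := {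
  uT : U (fun _ => True);
  uI : forall A B, U A -> U B -> U (fun x => A x /\ B x);
  uS : forall A B : T -> Prop, (forall x, A x -> B x) -> U A -> U B;
  uN : ~ U (fun _ => False);
  uC : forall A, U A \/ U (fun x => ~ A x) }.

Lemma ultra_exists (T : Type) (F : (T -> Prop) -> Prop) :
  F (fun _ => True) ->
  (forall A B, F A -> F B -> F (fun x => A x /\ B x)) ->
  (forall A, F A -> exists x, A x) ->
  exists V : (T -> Prop) -> Prop, ultra V /\ forall A, F A -> V A.
Proof.
move=> FT FI Fne.
pose G : (T -> Prop) -> Prop := fun P => exists A, F A /\ forall x, A x -> P x.
have PG : filter.ProperFilter G.
  split.
  - move=> [A [FA sA]]; have [x Ax] := Fne A FA; exact: (sA x Ax).
  - split.
    + by exists (fun _ => True); split.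
    + move=> P Q [A [FA sA]] [B [FB sB]]; exists (fun x => A x /\ B x); split; first exact: FI.
      by move=> x [Ax Bx]; split; [exact: sA|exact: sB].
    + move=> P Q sPQ [A [FA sA]]; exists A; split => // x Ax; exact/sPQ/sA.
have [U [UU sGU]] := filter.ultraFilterLemma PG.
exists U; split; last first.
  by move=> A FA; apply: sGU; exists A; split.
have PU : filter.ProperFilter U := @filter.ultra_proper _ U UU.
split.
- exact: (@filter.filterT _ U _).
- move=> A B UA UB; exact: (@filter.filterI _ U _ A B UA UB).
- move=> A B sAB UA; exact: (@filter.filterS _ U _ A B sAB UA).
- by have := @filter.filter_not_empty _ U PU.
- move=> A; exact: (filter.in_ultra_setVsetC A UU).
Qed.

Section Syntax.
Variable L : signature.

Fixpoint ren_term (rho : nat -> nat) (t : term L) : term L :=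
  match t with
  | tvar i => tvar L (rho i)
  | tapp f ts => tapp (fun j => ren_term rho (ts j))
  end.

Fixpoint ren (rho : nat -> nat) (phi : formula L) : formula L :=
  match phi with
  | fequal t u => fequal (ren_term rho t) (ren_term rho u)
  | Defs.frel r ts => @Defs.frel L r (fun j => ren_term rho (ts j))
  | fneg p => fneg (ren rho p)
  | fand p q => fand (ren rho p) (ren rho q)
  | fexists x p => fexists (rho x) (ren rho p)
  end.

Lemma eval_ren (M : structure L) (E : nat -> M) rho t :
  eval_term E (ren_term rho t) = eval_term (E \o rho) t.
Proof.
elim: t => [i|f ts IH] //=; congr (fun_interp _); apply: functional_extensionality => j; exact: IH.
Qed.

Lemma sat_ren (M : structure L) rho (phi : formula L) :
  injective rho -> forall E : nat -> M, sat E (ren rho phi) <-> sat (E \o rho) phi.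
Proof.
move=> inj; elim: phi => [t u|r ts|p IH|p IHp q IHq|x p IH] E /=.
- by rewrite !eval_ren.
- have -> : (fun j => eval_term E (ren_term rho (ts j))) = (fun j => eval_term (E \o rho) (ts j)) by
    apply: functional_extensionality => j; rewrite eval_ren.
  by [].
- by rewrite IH.
- by rewrite IHp IHq.
- split=> [[v Hv]|[v Hv]]; exists v.
  + move: Hv; rewrite IH; suff -> : upd E (rho x) v \o rho = upd (E \o rho) x v by [].
    by apply: functional_extensionality => w; rewrite /upd /= (inj_eq inj).
  + rewrite IH; suff -> : upd E (rho x) v \o rho = upd (E \o rho) x v by [].
    by apply: functional_extensionality => w; rewrite /upd /= (inj_eq inj).
Qed.

Fixpoint exs (vs : seq nat) (phi : formula L) : formula L :=
  match vs with [::] => phi | v :: vs' => fexists v (exs vs' phi) end.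

Definition override (T : Type) (E : nat -> T) (vs : seq nat) (g : nat -> T) :=
  fun v => if v \in vs then g v else E v.

Lemma sat_exs (M : structure L) vs phi (E : nat -> M) :
  sat E (exs vs phi) <-> exists g, sat (override E vs g) phi.
Proof.
elim: vs E => [|v vs IH] E /=.
  have H : forall g : nat -> M, override E [::] g = E by move=> g; apply: functional_extensionality.
  by split=> [h|[g]]; [exists E; rewrite H|rewrite H].
split=> [[a]|[g Hg]].
  rewrite IH => -[g Hg]; exists (fun w => if w \in vs then g w else a).
  suff <- : override (upd E v a) vs g = override E (v :: vs) (fun w => if w \in vs then g w else a) by [].
  apply: functional_extensionality => w; rewrite /override /upd in_cons.
  by case: (w \in vs); case: (w == v); rewrite ?orbT.
exists (g v); rewrite IH; exists g.
suff -> : override (upd E v (g v)) vs g = override E (v :: vs) g by [].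
apply: functional_extensionality => w; rewrite /override /upd in_cons.
by case: (w \in vs); case: eqP => [->|]; rewrite ?orbT.
Qed.

Definition ftrue : formula L := fequal (tvar L 0) (tvar L 0).
Definition ffalse : formula L := fneg ftrue.
Definition bigand (l : seq (formula L)) := foldr (@fand L) ftrue l.

Lemma sat_bigand (M : structure L) (T : eqType) (F : T -> formula L) (l : seq T) (E : nat -> M) :
  sat E (bigand (map F l)) <-> (forall x, x \in l -> sat E (F x)).
Proof.
elim: l => [|x l IH] /=; first by split.
rewrite IH; split=> [[H1 H2] y|H]; first by rewrite in_cons => /orP [/eqP ->|]; [|exact: H2].
by split=> [|y yl]; apply: H; rewrite in_cons ?eqxx ?yl ?orbT.
Qed.

Lemma sat_bigandF (M : structure L) (T : finType) (F : T -> formula L) (E : nat -> M) :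
  sat E (bigand (map F (enum T))) <-> (forall x, sat E (F x)).
Proof. by rewrite sat_bigand; split=> H x; [apply: H; rewrite mem_enum|]. Qed.

Lemma sat_free_term (M : structure L) (E E' : nat -> M) t :
  (forall v, occurs_term v t -> E v = E' v) -> eval_term E t = eval_term E' t.
Proof.
elim: t => [i|f ts IH] /= H; first exact: H.
congr (fun_interp _); apply: functional_extensionality => j; apply: IH => v Hv; apply: H; by exists j.
Qed.

Lemma sat_free (M : structure L) (phi : formula L) (E E' : nat -> M) :
  (forall v, free_in v phi -> E v = E' v) -> (sat E phi <-> sat E' phi).
Proof.
elim: phi E E' => [t u|r ts|p IH|p IHp q IHq|x p IH] E E' /= H.
- by rewrite (sat_free_term (E:=E) (E':=E')) ?(sat_free_term (t:=u) (E:=E) (E':=E')) // => v Hv; apply: H; [right|left].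
- have -> // : (fun j => eval_term E (ts j)) = (fun j => eval_term E' (ts j)).
  apply: functional_extensionality => j; apply: sat_free_term => v Hv; apply: H; by exists j.
- by rewrite (IH E E').
- by rewrite (IHp E E') ?(IHq E E') // => v Hv; apply: H; [right|left].
- split=> -[a Ha]; exists a; move: Ha; rewrite (IH _ (upd E' x a)) //;
    move=> v Hv; rewrite /upd; case: eqP => // /eqP nvx; apply: H; split=> //; exact/eqP.
Qed.

Fixpoint maxvar_term (t : term L) : nat :=
  match t with tvar i => i | tapp f ts => \max_(j < farity f) maxvar_term (ts j) end.
Fixpoint maxvar (phi : formula L) : nat :=
  match phi with
  | fequal t u => maxn (maxvar_term t) (maxvar_term u)
  | Defs.frel r ts => \max_(j < rarity r) maxvar_term (ts j)
  | fneg p => maxvar p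
  | fand p q => maxn (maxvar p) (maxvar q)
  | fexists x p => maxn x (maxvar p)
  end.

Lemma occurs_maxvar v t : occurs_term v t -> v <= maxvar_term t.
Proof.
elim: t => [i|f ts IH] /=; first by move->.
move=> [j Hj]; apply: leq_trans (IH j Hj) _; exact: (leq_bigmax j).
Qed.

Lemma free_maxvar v phi : free_in v phi -> v <= maxvar phi.
Proof.
elim: phi => [t u|r ts|p IH|p IHp q IHq|x p IH] /=.
- by case=> /occurs_maxvar H; rewrite leq_max H ?orbT.
- move=> [j /occurs_maxvar Hj]; apply: leq_trans Hj _; exact: (leq_bigmax j).
- exact: IH.
- by case=> /[dup] H; [move/IHp|move/IHq] => H'; rewrite leq_max H' ?orbT.
- by move=> [_ /IH H]; rewrite leq_max H orbT.
Qed.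

Lemma free_exs v vs phi : free_in v (exs vs phi) -> v \notin vs /\ free_in v phi.
Proof.
elim: vs => [|w vs IH] //= [nvw /IH [H1 H2]]; split=> //.
by rewrite in_cons negb_or H1 andbT; apply/eqP.
Qed.

Definition close (phi : formula L) := exs (iota 0 (maxvar phi).+1) phi.

Lemma close_sentence phi : sentence (close phi).
Proof.
move=> v /free_exs [H1 /free_maxvar H2]; move: H1; by rewrite mem_iota /= add0n ltnS H2.
Qed.

Lemma sat_close (M : structure L) (phi : formula L) (E : nat -> M) :
  sat E (close phi) <-> exists g, sat (override E (iota 0 (maxvar phi).+1) g) phi.
Proof. exact: sat_exs. Qed.

Definition pos (J : finType) (j : J) : nat := val (enum_rank j).

Lemma pos_inj (J : finType) : injective (@pos J).
Proof. by move=> x y /val_inj /enum_rank_inj. Qed.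

Lemma pos_lt (J : finType) (j : J) : pos j < #|J|.
Proof. exact: ltn_ord. Qed.

Definition repv (M : structure L) (J : finType) (vs : J -> nat) (phi : formula L)
  (Z : (J -> M) -> Prop) := forall E : nat -> M, sat E phi <-> Z (E \o vs).

Definition rep (M : structure L) (J : finType) (phi : formula L) (Z : (J -> M) -> Prop) :=
  repv (@pos J) phi Z.

Definition substf (J : finType) (vs : J -> nat) (h : J -> nat) (phi : formula L) :=
  let W := (\max_(j : J) h j).+1 in
  exs [seq W + vs j | j <- enum J]
    (fand (bigand [seq fequal (tvar L (W + vs j)) (tvar L (h j)) | j <- enum J])
          (ren (addn W) phi)).

Lemma sat_substf (M : structure L) (J : finType) (vs : J -> nat) (h : J -> nat) phi
  (Z : (J -> M) -> Prop) :
  injective vs -> repv vs phi Z -> forall E, sat E (substf vs h phi) <-> Z (E \o h).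
Proof.
move=> inj rp E; rewrite /substf sat_exs.
set W := (\max_(j : J) h j).+1.
set us := [seq W + vs j | j <- enum J].
have hW j : h j < W by rewrite ltnS; exact: (leq_bigmax j).
have hnin j : (h j \in us) = false.
  apply/negP => /mapP [j' _ Hj]; move: (hW j); rewrite Hj; by rewrite ltnNge leq_addr.
have uin j : (W + vs j) \in us by apply: map_f; rewrite mem_enum.
split=> [[g /= [Heq Hren]]|HZ].
  move: Heq; rewrite sat_bigand => Heq.
  move: Hren; rewrite sat_ren; last by move=> a b /eqP; rewrite eqn_add2l => /eqP.
  rewrite rp; suff -> : (override E us g \o addn W) \o vs = E \o h by [].
  apply: functional_extensionality => j /=.
  have := Heq j; rewrite mem_enum => /(_ isT) /=; by rewrite /override hnin.
pose g v := if [pick j | W + vs j == v] is Some j then E (h j) else E v.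
have gE j : g (W + vs j) = E (h j).
  rewrite /g; case: pickP => [j' /eqP /addnI /inj -> //|/(_ j)]; by rewrite eqxx.
exists g; split.
  rewrite sat_bigand => j _ /=.
  by rewrite /override uin hnin gE.
rewrite sat_ren; last by move=> a b /eqP; rewrite eqn_add2l => /eqP.
rewrite rp; suff -> : (override E us g \o addn W) \o vs = E \o h by [].
apply: functional_extensionality => j /=; by rewrite /override uin gE.
Qed.

Lemma rep_pull (M : structure L) (I J : finType) (g : J -> I) phi (Z : (J -> M) -> Prop) :
  rep phi Z -> rep (substf (@pos J) (fun j => pos (g j)) phi) (fun a => Z (a \o g)).
Proof. move=> rp E; rewrite (sat_substf _ (@pos_inj J) rp); by []. Qed.

Lemma rep_ext (M : structure L) (J : finType) phi (Z Z' : (J -> M) -> Prop) :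
  (forall z, Z z <-> Z' z) -> rep phi Z -> rep phi Z'.
Proof. by move=> H rp E; rewrite rp H. Qed.

Lemma rep_neg (M : structure L) (J : finType) phi (Z : (J -> M) -> Prop) :
  rep phi Z -> rep (fneg phi) (fun z => ~ Z z).
Proof. by move=> rp E /=; rewrite rp. Qed.

Lemma rep_and (M : structure L) (J : finType) phi psi (Z Z' : (J -> M) -> Prop) :
  rep phi Z -> rep psi Z' -> rep (fand phi psi) (fun z => Z z /\ Z' z).
Proof. by move=> rp rq E /=; rewrite rp rq. Qed.

Lemma rep_true (M : structure L) (J : finType) : rep ftrue (fun _ : J -> M => True).
Proof. by move=> E. Qed.

Lemma rep_false (M : structure L) (J : finType) : rep ffalse (fun _ : J -> M => False).
Proof. by move=> E; split=> //= H; apply: H. Qed.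

Lemma rep_bigand (M : structure L) (J K : finType) (F : K -> formula L) (Z : K -> (J -> M) -> Prop) :
  (forall k, rep (F k) (Z k)) -> rep (bigand (map F (enum K))) (fun z => forall k, Z k z).
Proof. move=> rp E; rewrite sat_bigandF; split=> H k; by [rewrite -rp|rewrite rp]. Qed.

Definition projf (I K : finType) (phi : formula L) :=
  exs [seq #|I| + pos k | k <- enum K]
      (substf (@pos (I + K)%type) (fun x => match x with inl i => pos i | inr k => #|I| + pos k end) phi).

Lemma rep_proj (M : structure L) (I K : finType) phi (Z : ((I + K)%type -> M) -> Prop) :
  rep phi Z -> rep (projf I K phi)
    (fun a => exists u : K -> M, Z (fun x => match x with inl i => a i | inr k => u k end)).
Proof.
move=> rp E; rewrite /projf sat_exs.
set us := [seq #|I| + pos k | k <- enum K].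
have nin (i : I) : (pos i \in us) = false.
  apply/negP => /mapP [k _ Hk]; move: (pos_lt i); by rewrite Hk ltnNge leq_addr.
have uin (k : K) : (#|I| + pos k) \in us by apply: map_f; rewrite mem_enum.
split=> [[g]|[u Hu]].
  rewrite (sat_substf _ (@pos_inj _) rp) => H; exists (fun k => g (#|I| + pos k)).
  move: H; congr Z; apply: functional_extensionality => -[i|k] /=; by rewrite /override ?nin ?uin.
pose g v := if [pick k | #|I| + pos k == v] is Some k then u k else E v.
exists g; rewrite (sat_substf _ (@pos_inj _) rp); move: Hu; congr Z.
apply: functional_extensionality => -[i|k] /=; rewrite /override ?nin ?uin //.
rewrite /g; case: pickP => [k' /eqP /addnI /pos_inj -> //|/(_ k)]; by rewrite eqxx.
Qed.

Lemma repv_base (M : structure L) (J : finType) (vs : J -> nat) (phi : formula L) :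
  (forall v, free_in v phi -> exists j, v = vs j) ->
  repv vs phi (fun z : J -> M => forall E, (forall j, E (vs j) = z j) -> sat E phi).
Proof.
move=> fv E; split=> [H E' HE'|H]; last exact: H.
rewrite (sat_free (E' := E)) // => v /fv [j ->]; by rewrite HE'.
Qed.

Lemma rep_base (M : structure L) (J : finType) (vs : J -> nat) (phi : formula L) :
  injective vs -> (forall v, free_in v phi -> exists j, v = vs j) ->
  rep (substf vs (@pos J) phi) (fun z : J -> M => forall E, (forall j, E (vs j) = z j) -> sat E phi).
Proof. move=> inj fv E; rewrite (sat_substf _ inj (repv_base fv)); by []. Qed.

Lemma tuple_env_pos (M : structure L) (I : finType) (a : I -> M) e (i : I) :
  tuple_env a e (pos i) = a i.
Proof. by rewrite /tuple_env /pos valK enum_rankK. Qed.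

Lemma tuple_env_big (M : structure L) (I : finType) (a : I -> M) e v :
  #|I| <= v -> tuple_env a e v = e v.
Proof. by move=> H; rewrite /tuple_env insubF // ltnNge H. Qed.

Lemma rep_definable (M : structure L) (I : finType) phi (X : (I -> M) -> Prop) :
  rep phi X -> definable X.
Proof.
case: (carrier_inhabited M) => x0 rp; exists phi, (fun _ => x0) => a.
rewrite rp; suff -> : (tuple_env a (fun _ => x0) \o @pos I) = a by [].
apply: functional_extensionality => i /=; exact: tuple_env_pos.
Qed.

Lemma rep_definable_par (M : structure L) (I K : finType) phi (Z : ((I + K)%type -> M) -> Prop)
  (c : K -> M) :
  rep phi Z -> definable (fun a : I -> M => Z (fun x => match x with inl i => a i | inr k => c k end)).
Proof.
case: (carrier_inhabited M) => x0 rp.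
pose h (x : (I + K)%type) := match x with inl i => pos i | inr k => #|I| + pos k end.
pose e v := if [pick k | #|I| + pos k == v] is Some k then c k else x0.
exists (substf (@pos _) h phi), e => a.
rewrite (sat_substf _ (@pos_inj _) rp).
suff -> : tuple_env a e \o h = (fun x => match x with inl i => a i | inr k => c k end) by [].
apply: functional_extensionality => -[i|k] /=.
  exact: tuple_env_pos.
rewrite tuple_env_big ?leq_addr // /e; case: pickP => [k' /eqP /addnI /pos_inj -> //|/(_ k)]; by rewrite eqxx.
Qed.

End Syntax.

Lemma sig_eqP (A : Type) (P : A -> Prop) (x y : sig P) : proj1_sig x = proj1_sig y -> x = y.
Proof. case: x y => [a p] [b q] /= e; subst; by rewrite (proof_irrelevance _ p q). Qed.

Section UltraFacts.
Variables (I : Type) (U : (I -> Prop) -> Prop).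
Hypothesis HU : ultra U.

Lemma uSS (A B : I -> Prop) : U A -> (forall x, A x -> B x) -> U B.
Proof. move=> UA sAB; exact: (uS HU sAB UA). Qed.

Lemma uAll (K : finType) (A : K -> I -> Prop) :
  (forall k, U (A k)) -> U (fun i => forall k, A k i).
Proof.
move=> H.
suff : forall l : seq K, U (fun i => forall k, k \in l -> A k i).
  move=> /(_ (enum K)) H'; apply: (uSS H') => i Hi k; apply: Hi; by rewrite mem_enum.
elim=> [|k l IH]; first by apply: (uSS (uT HU)) => i _ k.
apply: (uSS (uI HU (H k) IH)) => i [H1 H2] k'; rewrite in_cons => /orP [/eqP ->|]; [exact: H1|exact: H2].
Qed.

Lemma uconst (P : Prop) : U (fun _ => P) -> P.
Proof. move=> H; case: (classic P) => // nP; exfalso; apply: (uN HU); by apply: (uSS H). Qed.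

Lemma uconst' (P : Prop) : P -> U (fun _ => P).
Proof. move=> p; by apply: (uSS (uT HU)). Qed.
End UltraFacts.

Section Ultrapower.
Variables (L : signature) (N : structure L) (I : Type) (U : (I -> Prop) -> Prop).
Hypothesis HU : ultra U.

Definition uclass (h : I -> N) : (I -> N) -> Prop := fun h' => U (fun i => h i = h' i).
Definition Qc := {P : (I -> N) -> Prop | exists h, P = uclass h}.
Definition cls (h : I -> N) : Qc := exist _ (uclass h) (ex_intro _ h erefl).
Definition repq (q : Qc) : I -> N := proj1_sig (constructive_indefinite_description _ (proj2_sig q)).

Lemma cls_rep q : cls (repq q) = q.
Proof.
apply: sig_eqP => /=; rewrite /repq.
by case: (constructive_indefinite_description _ _) => h /= ->.
Qed.

Lemma cls_eq h h' : cls h = cls h' <-> U (fun i => h i = h' i).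
Proof.
split=> [/(f_equal (@proj1_sig _ _)) /= e|H].
  have : uclass h h by apply: (uSS HU (uT HU)).
  rewrite e /uclass => H; apply: (uSS HU H) => // i; by move->.
apply: sig_eqP => /=; apply: functional_extensionality => g; apply: propositional_extensionality.
rewrite /uclass; split=> H'.
  apply: (uSS HU (uI HU H H')) => // i [-> ->] //.
apply: (uSS HU (uI HU H H')) => // i [-> ->] //.
Qed.

Lemma rep_ae h : U (fun i => repq (cls h) i = h i).
Proof. by apply/cls_eq; rewrite cls_rep. Qed.

Definition UPinh : inhabited Qc :=
  match carrier_inhabited N with inhabits x => inhabits (cls (fun _ => x)) end.

Definition UP : structure L :=
  @Structure L Qc UPinh
    (fun f args => cls (fun i => @fun_interp L N f (fun j => repq (args j) i)))
    (fun r args => U (fun i => @rel_interp L N r (fun j => repq (args j) i))).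

Lemma los_term (G : nat -> I -> N) (t : term L) :
  eval_term (M := UP) (fun v => cls (G v)) t = cls (fun i => eval_term (fun v => G v i) t).
Proof.
elim: t => [v|f ts IH] //=.
apply/cls_eq.
have : U (fun i => forall j, repq (eval_term (M := UP) (fun v => cls (G v)) (ts j)) i
                         = eval_term (fun v => G v i) (ts j)).
  apply: (uAll HU) => // j; rewrite IH; exact: rep_ae.
move=> H0; apply: (uSS HU H0) => i H; congr fun_interp; apply: functional_extensionality => j; exact: H.
Qed.

Lemma los (phi : formula L) (G : nat -> I -> N) :
  sat (M := UP) (fun v => cls (G v)) phi <-> U (fun i => sat (fun v => G v i) phi).
Proof.
elim: phi G => [t u|r ts|p IH|p IHp q IHq|x p IH] G /=.
- by rewrite !los_term cls_eq.
- have H : U (fun i => forall j, repq (eval_term (M := UP) (fun v => cls (G v)) (ts j)) i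
                         = eval_term (fun v => G v i) (ts j)).
    apply: (uAll HU) => // j; rewrite los_term; exact: rep_ae.
  split=> H'.
    apply: (uSS HU (uI HU H H')) => // i [e1 e2].
    suff <- : (fun j => repq (eval_term (M := UP) (fun v => cls (G v)) (ts j)) i) =
              (fun j => eval_term (fun v => G v i) (ts j)) by [].
    apply: functional_extensionality => j; exact: e1.
  apply: (uSS HU (uI HU H H')) => // i [e1 e2].
  suff -> : (fun j => repq (eval_term (M := UP) (fun v => cls (G v)) (ts j)) i) =
            (fun j => eval_term (fun v => G v i) (ts j)) by [].
  apply: functional_extensionality => j; exact: e1.
- rewrite IH; split=> H.
    case: (uC HU (fun i => sat (fun v => G v i) p)) => H'; [by exfalso; apply: H|exact: H'].
  move=> H'; apply: (uN HU); apply: (uSS HU (uI HU H' H)) => i [a b]; exact: b a.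
- rewrite IHp IHq; split=> [[H1 H2]|H]; first by apply: (uSS HU (uI HU H1 H2)).
  by split; apply: (uSS HU H) => // i [].

- have updE (h : I -> N) : upd (fun v => cls (G v)) x (cls h) = (fun v => cls (upd G x h v)).
    apply: functional_extensionality => w; rewrite /upd; by case: (w == x).
  have updi (h : I -> N) i : (fun v => upd G x h v i) = upd (fun v => G v i) x (h i).
    apply: functional_extensionality => w; rewrite /upd; by case: (w == x).
  split=> [[q]|H].
    rewrite -(cls_rep q) updE IH => H; apply: (uSS HU H) => // i; rewrite updi => H1; by exists (repq q i).
  pose h i := match excluded_middle_informative (exists a, sat (upd (fun v => G v i) x a) p) with
              | left H => proj1_sig (constructive_indefinite_description _ H)
              | right _ => G x i end.
  exists (cls h); rewrite updE IH; apply: (uSS HU H) => // i Hi; rewrite updi /h.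
  case: excluded_middle_informative => // H'.
  by case: (constructive_indefinite_description _ _).
Qed.

Lemma los_env (phi : formula L) (E : nat -> UP) :
  sat E phi <-> U (fun i => sat (fun v => repq (E v) i) phi).
Proof.
rewrite -los; suff -> : (fun v => cls (repq (E v))) = E by [].
apply: functional_extensionality => v; exact: cls_rep.
Qed.

Lemma UP_model (T : theory L) : model T N -> model T UP.
Proof.
move=> MT phi Tphi E; rewrite los_env; apply: (uSS HU (uT HU)) => // i _; exact: MT.
Qed.
End Ultrapower.

Unset Implicit Arguments.
Record pform (L : signature) := PForm {
  pk : nat; pnx : nat; pny : 'I_pk -> nat;
  pvx : 'I_pnx -> nat; pvy : forall i : 'I_pk, 'I_(pny i) -> nat;
  pphi : formula L;
  pfree : forall v, free_in v pphi -> (exists j, v = pvx j) \/ (exists i j, v = pvy i j);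
  pinj : injective (fun x : ('I_pnx + {i : 'I_pk & 'I_(pny i)})%type =>
            match x with inl j => pvx j | inr p => pvy (projT1 p) (projT2 p) end) }.

Set Implicit Arguments.
Arguments pk {L} p.
Arguments pnx {L} p.
Arguments pny {L} p _.
Arguments pphi {L} p.
Arguments pvx {L} p _.
Arguments pvy {L} p i _.

Definition pat (L : signature) (M : structure L) (P : pform L) (A : Type) :=
  exists b : forall i : 'I_(pk P), A -> 'I_(pny P i) -> M,
    forall S : ('I_(pk P) -> A) -> Prop,
      exists a : 'I_(pnx P) -> M,
        forall (s : 'I_(pk P) -> A) (E : nat -> M),
          (forall j, E (pvx P j) = a j) ->
          (forall i j, E (pvy P i j) = b i (s i) j) ->
          (sat E (pphi P) <-> S s).

Lemma dep_choice (X : Type) (Y : X -> Type) (R : forall x, Y x -> Prop) :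
  (forall x, exists y, R x y) -> exists f : forall x, Y x, forall x, R x (f x).
Proof.
move=> H; exists (fun x => proj1_sig (constructive_indefinite_description _ (H x))) => x.
exact: proj2_sig (constructive_indefinite_description _ (H x)).
Qed.

Section Lists.
Variable A : Type.

Lemma in_list_cat (x : A) s t : in_list x (s ++ t) <-> in_list x s \/ in_list x t.
Proof.
elim: s => [|y s IH] /=; first by split=> [H|[[]|H]] //; right.
rewrite IH; tauto.
Qed.

Lemma in_list_map (K : eqType) (f : K -> A) (l : seq K) k : k \in l -> in_list (f k) (map f l).
Proof.
elim: l => [|y l IH] //=; rewrite in_cons => /orP [/eqP ->|/IH]; [left|right] => //.
Qed.

Fixpoint posl (F : seq A) (a : A) : nat :=
  match F with
  | [::] => 0
  | x :: F' => if excluded_middle_informative (x = a) then 0 else (posl F' a).+1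
  end.

Lemma posl_lt F a : in_list a F -> posl F a < size F.
Proof.
elim: F => [|x F IH] //= H; case: excluded_middle_informative => // nxa.
rewrite ltnS; apply: IH; by case: H.
Qed.

Lemma posl_inj F a a' : in_list a F -> in_list a' F -> posl F a = posl F a' -> a = a'.
Proof.
elim: F => [|x F IH] //= Ha Ha'.
case: excluded_middle_informative => [xa|nxa]; case: excluded_middle_informative => [xa'|nxa'] //.
- by move=> _; rewrite -xa -xa'.
- move=> [] e; apply: IH => //; [by case: Ha|by case: Ha'].
Qed.

Definition idx (F : seq A) (a : A) : 'I_(size F).+1 := inord (posl F a).

Lemma idx_inj F a a' : in_list a F -> in_list a' F -> idx F a = idx F a' -> a = a'.
Proof.
move=> Ha Ha' /(f_equal (@nat_of_ord _)); rewrite /idx !inordK; last 2 first.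
- by apply: leq_trans (posl_lt Ha') _.
- by apply: leq_trans (posl_lt Ha) _.
exact: posl_inj.
Qed.
End Lists.

Section Stretch.
Variables (L : signature) (N : structure L) (A : Type) (U : (seq A -> Prop) -> Prop).
Hypothesis HU : ultra U.
Hypothesis Hcone : forall F0 : seq A, U (fun F => forall x, in_list x F0 -> in_list x F).

Lemma stretch1 (P : pform L) : (forall l, pat N P 'I_l) -> pat (UP N U) P A.
Proof.
move=> hb.
have [bF bFspec] := dep_choice hb.
have [aF aFspec] := dep_choice (fun l => dep_choice (bFspec l)).
exists (fun i a j => cls U (fun F => bF (size F).+1 i (idx F a) j)) => S.
pose SF (F : seq A) (t : 'I_(pk P) -> 'I_(size F).+1) :=
  exists s, S s /\ (forall i, in_list (s i) F) /\ (forall i, idx F (s i) = t i).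
exists (fun j => cls U (fun F => aF (size F).+1 (SF F) j)) => s E Hx Hy.
rewrite los_env //.
pose Gd F := (forall j, repq (E (pvx P j)) F = aF (size F).+1 (SF F) j) /\
             (forall i j, repq (E (pvy P i j)) F = bF (size F).+1 i (idx F (s i)) j) /\
             (forall i, in_list (s i) F).
have UGd : U Gd.
  apply: (uI HU); last apply: (uI HU).
  - apply: (uAll HU) => j; rewrite Hx; exact: rep_ae.
  - apply: (uAll HU) => i; apply: (uAll HU) => j; rewrite Hy; exact: rep_ae.
  - apply: (uSS HU (Hcone [seq s i | i <- enum 'I_(pk P)])) => F H i; apply: H.
    apply: in_list_map; by rewrite mem_enum.
have key F : Gd F -> (sat (fun v => repq (E v) F) (pphi P) <-> S s).
  move=> [G1 [G2 G3]].
  rewrite (aFspec (size F).+1 (SF F) (fun i => idx F (s i))) //.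
  split=> [[s' [Ss' [Hs'1 Hs'2]]]|Ss]; last by exists s.
  suff -> : s = s' by [].
  apply: functional_extensionality => i; apply: (idx_inj (G3 i) (Hs'1 i)); by rewrite Hs'2.
split=> H.
  apply: (uconst HU); apply: (uSS HU (uI HU H UGd)) => F [H1 H2]; exact: (proj1 (key F H2) H1).
apply: (uSS HU UGd) => F G; exact: (proj2 (key F G) H).
Qed.
End Stretch.

Lemma stretch (L : signature) (T : theory L) (N : structure L) (Ps : nat -> pform L) :
  model T N -> (forall m l, pat N (Ps m) 'I_l) ->
  forall A : Type, exists N' : structure L, model T N' /\ forall m, pat N' (Ps m) A.
Proof.
move=> MT hb A.
pose cone (F0 F : seq A) := forall x, in_list x F0 -> in_list x F.
pose Fb := (fun P : seq A -> Prop => exists F0, forall F, cone F0 F -> P F).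
have h1 : Fb (fun _ => True) by exists [::].
have h2 : forall P Q, Fb P -> Fb Q -> Fb (fun x => P x /\ Q x).
  move=> P Q [F0 H0] [F1 H1]; exists (F0 ++ F1) => F HF; split.
    apply: H0 => x Hx; apply: HF; rewrite in_list_cat; by left.
  apply: H1 => x Hx; apply: HF; rewrite in_list_cat; by right.
have h3 : forall P, Fb P -> exists x, P x.
  move=> P [F0 H0]; exists F0; exact: H0.
have [U [HU sU]] := ultra_exists h1 h2 h3.
exists (UP N U); split; first exact: UP_model.
move=> m; apply: stretch1 => //.
move=> F0; apply: sU; by exists F0.
Qed.

Definition decide (P : Prop) : bool := if excluded_middle_informative P then true else false.
Lemma decideP (P : Prop) : decide P = true <-> P.
Proof. rewrite /decide; case: excluded_middle_informative => //; split=> //. Qed.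
Lemma decideF (P : Prop) : decide P = false <-> ~ P.
Proof. rewrite /decide; case: excluded_middle_informative => //; split=> //. Qed.

Lemma in_list_mapP (A B : Type) (f : A -> B) (l : seq A) y :
  in_list y (map f l) <-> exists x, in_list x l /\ f x = y.
Proof.
elim: l => [|x l IH] /=; first by split=> // -[x []].
split.
  case=> [<-|/IH [x' [H1 H2]]]; first by exists x; split=> //; left.
  by exists x'; split=> //; right.
case=> x' [[<-|H1] H2]; first by left.
by right; apply/IH; exists x'.
Qed.

Lemma mem_map_filter (A : Type) (B : eqType) (f : A -> B) (p : pred A) (l : seq A) y :
  y \in map f (filter p l) <-> exists x, in_list x l /\ p x /\ y = f x.
Proof.
elim: l => [|x l IH] /=; first by split=> // -[x []].
case px: (p x) => /=.
  rewrite in_cons; split.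
    case/orP=> [/eqP ->|/IH [x' [H1 H2]]]; first by exists x; split=> //; left.
    by exists x'; split=> //; right.
  case=> x' [[<-|H1] [H2 H3]]; first by rewrite H3 eqxx.
  by apply/orP; right; apply/IH; exists x'.
split.
  move/IH=> [x' [H1 H2]]; by exists x'; split=> //; right.
case=> x' [[<-|H1] [H2 H3]]; first by rewrite px in H2.
by apply/IH; exists x'.
Qed.

Section Perm.
Variables (K : nat) (W : Type).
Lemma perm_same_range (z z' : 'I_K -> W) :
  injective z -> injective z' -> (forall v, (exists i, z i = v) <-> (exists i, z' i = v)) ->
  exists s : {perm 'I_K}, forall i, z' i = z (s i).
Proof.
move=> iz iz' H.
pose f i := if [pick j | decide (z j = z' i)] is Some j then j else i.
have fP i : z (f i) = z' i.
  rewrite /f; case: pickP => [j /decideP //|H0].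
  have [j Hj] : exists j, z j = z' i by apply/H; exists i.
  by move: (H0 j); rewrite (proj2 (decideP _) Hj).
have finj : injective f by move=> i j e; apply: iz'; rewrite -fP e fP.
exists (perm finj) => i; by rewrite permE fP.
Qed.
End Perm.

Lemma mem_map_inl (A : Type) (B : eqType) (f : A -> B) (l : seq A) y :
  y \in map f l <-> exists x, in_list x l /\ y = f x.
Proof.
elim: l => [|x l IH] /=; first by split=> // -[x []].
rewrite in_cons; split.
  case/orP=> [/eqP ->|/IH [x' [H1 H2]]]; first by exists x; split=> //; left.
  by exists x'; split=> //; right.
case=> x' [[<-|H1] H2]; first by rewrite H2 eqxx.
by apply/orP; right; apply/IH; exists x'.
Qed.

Section Gen.
Variable K : nat.

Definition req (n : nat) : option (seq (seq nat)) := unpickle (logn 2 n).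

Lemma req_many (D : seq (seq nat)) B : exists y, B < y /\ req y = Some D.
Proof.
exists (B.*2.+1 * 2 ^ pickle D); split.
  have h : 0 < 2 ^ pickle D by rewrite expn_gt0.
  apply: leq_trans (_ : B.*2.+1 <= _); first by rewrite ltnS -addnn leq_addr.
  by rewrite leq_pmulr.
rewrite /req logn_Gauss ?pfactorK ?pickleK //.
by rewrite coprime2n /= odd_double.
Qed.

Definition EdgeSet (B : nat -> Prop) :=
  exists y, B y /\ (forall v, B v -> v <= y) /\
    exists D, req y = Some D /\ exists d, d \in D /\ forall v, v \in d <-> (B v /\ v <> y).

Lemma EdgeSet_ext (B B' : nat -> Prop) : (forall v, B v <-> B' v) -> EdgeSet B -> EdgeSet B'.
Proof.
move=> H [y [By [My [D [RD [d [dD Hd]]]]]]]; exists y; split; first exact/H.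
split; first by move=> v /H; exact: My.
exists D; split=> //; exists d; split=> // v; rewrite Hd H //.
Qed.

Lemma EdgeSet_max (B : nat -> Prop) y : B y -> (forall v, B v -> v <= y) ->
  EdgeSet B <-> exists D, req y = Some D /\ exists d, d \in D /\ forall v, v \in d <-> (B v /\ v <> y).
Proof.
move=> By My; split=> [[y' [By' [My' H]]]|H].
  have -> : y = y' by apply/eqP; rewrite eqn_leq My' // My.
  exact: H.
by exists y.
Qed.

Definition edgeH (z : 'I_K -> nat) := injective z /\ EdgeSet (fun v => exists i, z i = v).

Lemma edgeH_perm (z : 'I_K -> nat) (s : {perm 'I_K}) : edgeH z -> edgeH (z \o s).
Proof.
move=> [iz Ez]; split; first by move=> i j /iz /perm_inj.
apply: EdgeSet_ext Ez => v; split=> [[i <-]|[i <-]]; last by exists (s i).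
by exists (s^-1 i)%g => /=; rewrite permKV.
Qed.

Lemma edgeH_hyp : is_khypergraph edgeH.
Proof. split; [by move=> a []|move=> a s; exact: edgeH_perm]. Qed.

Section Hiso.
Variables (W : Type) (Rw : ('I_K -> W) -> Prop).
Hypothesis HR : is_khypergraph Rw.

Definition hiso (ps : seq (W * nat)) :=
  (forall a b a' b', in_list (a, b) ps -> in_list (a', b') ps -> (a = a' <-> b = b')) /\
  (forall z w, (forall i, in_list (z i, w i) ps) -> (Rw z <-> edgeH w)).

Fixpoint subs (l : seq W) : seq (seq W) :=
  match l with [::] => [:: [::]] | x :: l' => subs l' ++ map (cons x) (subs l') end.

Lemma subs_complete l (B : W -> Prop) : (forall v, B v -> in_list v l) ->
  exists d, in_list d (subs l) /\ forall v, in_list v d <-> B v.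
Proof.
elim: l B => [|x l IH] B HB /=.
  exists [::]; split; first by left.
  by move=> v; split=> // /HB.
have HB' : forall v, B v /\ v <> x -> in_list v l.
  move=> v [Bv nvx]; case: (HB v Bv) => // e; exfalso; apply: nvx; by rewrite e.
have [d [Hd1 Hd2]] := IH (fun v => B v /\ v <> x) HB'.
case: (classic (B x)) => Bx.
  exists (x :: d); split.
    rewrite in_list_cat; right; apply/in_list_mapP; by exists d.
  move=> v /=; rewrite Hd2; split=> [[<-|[]]|Bv] //.
  by case: (classic (x = v)) => [|nxv]; [left|right; split=> // e; apply: nxv].
exists d; split; first by rewrite in_list_cat; left.
move=> v; rewrite Hd2; split=> [[]|Bv] //; split=> // e; by rewrite e in Bv.
Qed.

Lemma subs_sub l d : in_list d (subs l) -> forall v, in_list v d -> in_list v l.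
Proof.
elim: l d => [|x l IH] d /=; first by case=> // <-.
rewrite in_list_cat => -[/IH H v /H|/in_list_mapP [d' [H1 <-]] v /= [->|Hv]]; [by right|by left|].
right; exact: IH H1 v Hv.
Qed.

Definition partner (ps : seq (W * nat)) (a : W) : nat :=
  match excluded_middle_informative (exists b, in_list (a, b) ps) with
  | left H => proj1_sig (constructive_indefinite_description _ H)
  | right _ => 0 end.

Lemma partnerP ps a b : in_list (a, b) ps -> in_list (a, partner ps a) ps.
Proof.
move=> H; rewrite /partner; case: excluded_middle_informative => [H'|[]]; last by exists b.
by case: (constructive_indefinite_description _ _).
Qed.

Lemma in_cons_pair (a : W) b x y (ps : seq (W * nat)) :
  in_list (a, b) ((x, y) :: ps) <-> (a = x /\ b = y) \/ in_list (a, b) ps.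
Proof. by split=> [[[-> ->]|H]|[[-> ->]|H]]; [left|right|left|right]. Qed.

Definition bnd (ps : seq (W * nat)) := foldr (fun q m => maxn q.2 m) 0 ps.
Lemma bndP ps a b : in_list (a, b) ps -> b <= bnd ps.
Proof.
elim: ps => [|[a' b'] ps IH] //= [[_ <-]|/IH H]; rewrite leq_max ?leqnn //.
by rewrite H orbT.
Qed.

Lemma forth ps x : hiso ps -> exists y, hiso ((x, y) :: ps).
Proof.
move=> [Hp He].
case: (classic (exists b, in_list (x, b) ps)) => [[b xb]|nx].
  exists b; split.
    move=> a1 b1 a2 b2 /in_cons_pair H1 /in_cons_pair H2; apply: Hp.
      by case: H1 => [[-> ->]|].
    by case: H2 => [[-> ->]|].
  move=> z w Hzw; apply: He => i; case/in_cons_pair: (Hzw i) => [[-> ->]|] //.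
pose dom := map fst ps.
have domP a : in_list a dom <-> exists b, in_list (a, b) ps.
  rewrite in_list_mapP; split=> [[[a' b'] [H1 /= <-]]|[b' H]]; first by exists b'.
  by exists (a, b').
pose Q (d : seq W) := exists z : 'I_K -> W, injective z /\ Rw z /\
  forall v, (exists i, z i = v) <-> (v = x \/ in_list v d).
pose D' := [seq map (partner ps) d | d <- subs dom & decide (Q d)].
have [y [Hy Ry]] := req_many D' (bnd ps).
exists y.
have P1 : forall a b a' b', in_list (a, b) ((x, y) :: ps) -> in_list (a', b') ((x, y) :: ps) ->
    (a = a' <-> b = b').
  move=> a1 b1 a2 b2 /in_cons_pair [[-> ->]|H1] /in_cons_pair [[-> ->]|H2] //; last exact: Hp.
  - split=> e; exfalso; [apply: nx; exists b2; by rewrite e|].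
    by move: (bndP H2); rewrite -e leqNgt Hy.
  - split=> e; exfalso; [apply: nx; exists b1; by rewrite -e|].
    by move: (bndP H1); rewrite e leqNgt Hy.
split=> // z w Hzw.
case: (classic (exists i0, z i0 = x)) => [[i0 zi0]|nzx]; last first.
  apply: He => i; case/in_cons_pair: (Hzw i) => [[zx _]|//]; by exfalso; apply: nzx; exists i.
have PS i : z i <> x -> in_list (z i, w i) ps.
  by move=> nzi; case/in_cons_pair: (Hzw i) => [[]|].
have wi0 : w i0 = y.
  case/in_cons_pair: (Hzw i0) => [[_ ->]|H] //; exfalso; apply: nx; exists (w i0); by rewrite -zi0.
have zxw i : z i = x <-> w i = y.
  exact: (P1 _ _ _ _ (Hzw i) (or_introl erefl)).
have pw i : z i <> x -> partner ps (z i) = w i.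
  move=> nzi; have H1 := PS i nzi; have H2 := partnerP H1.
  by apply/(Hp _ _ _ _ H2 H1).
have injzw : injective z <-> injective w.
  split=> H i j e; apply: H; by apply/(P1 _ _ _ _ (Hzw i) (Hzw j)).
case: (classic (injective z)) => [iz|niz]; last first.
  split=> [/(proj1 HR)//|[iw _]]; by exfalso; apply/niz/injzw.
have iw : injective w by apply/injzw.
have wmax v : (exists i, w i = v) -> v <= y.
  move=> [i <-]; case: (classic (z i = x)) => [/zxw ->|nzi] //.
  by apply: leq_trans (bndP (PS i nzi)) (ltnW Hy).
have -> : edgeH w <-> exists d', d' \in D' /\ forall v, v \in d' <-> ((exists i, w i = v) /\ v <> y).
  rewrite /edgeH; split=> [[_ /(EdgeSet_max (ex_intro _ i0 wi0) wmax) [D [RD H]]]|H].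
    by move: RD; rewrite Ry => -[->].
  split=> //; apply/(EdgeSet_max (ex_intro _ i0 wi0) wmax); by exists D'.
split=> [Rz|[d' [d'D' Hd']]].
  pose Bz v := exists i, z i = v /\ v <> x.
  have [d [Hd1 Hd2]] : exists d, in_list d (subs dom) /\ forall v, in_list v d <-> Bz v.
    apply: subs_complete => v [i [<- nzi]]; apply/domP; exists (w i); exact: PS.
  exists (map (partner ps) d); split.
    apply/mem_map_filter; exists d; split=> //; split=> //; apply/decideP.
    exists z; split=> //; split=> // v; rewrite Hd2; split=> [[i <-]|[->|[i [<- _]]]].
      by case: (classic (z i = x)) => [->|nzi]; [left|right; exists i].
    by exists i0.
    by exists i.
  move=> v; rewrite mem_map_inl; split=> [[a [/Hd2 [i [<- nzi]] ->]]|[[i <-] nwy]].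
    rewrite pw //; split; [by exists i|by move/zxw].
  have nzi : z i <> x by move/zxw.
  exists (z i); split; [apply/Hd2; by exists i|by rewrite pw].
move: d'D' Hd' => /mem_map_filter [d [Hd1 [/decideP [z' [iz' [Rz' Hz']]] ->]]] Hd'.
have rng v : (exists i, z i = v) <-> (exists i, z' i = v).
  rewrite Hz'; split=> [[i <-]|[->|Hv]].
  - case: (classic (z i = x)) => [->|nzi]; [by left|right].
    have : w i \in map (partner ps) d by apply/Hd'; split; [exists i|move/zxw].
    move/mem_map_inl => [a [ad pa]].
    have [b ab] : exists b, in_list (a, b) ps by apply/domP; exact: subs_sub Hd1 a ad.
    have H2 := partnerP ab.
    have -> : z i = a by apply/(Hp _ _ _ _ (PS i nzi) H2).
    exact: ad.
  - by exists i0.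
  - have [b vb] : exists b, in_list (v, b) ps by apply/domP; exact: subs_sub Hd1 v Hv.
    have : partner ps v \in map (partner ps) d by apply/mem_map_inl; exists v.
    move/Hd' => [[i wi] nwy].
    have nzi : z i <> x by move/zxw; rewrite wi.
    exists i; apply/(Hp _ _ _ _ (PS i nzi) (partnerP vb)); by rewrite wi.
have [s Hs] := perm_same_range iz' iz (fun v => iff_sym (rng v)).
have -> : z = z' \o s by apply: functional_extensionality => i; rewrite Hs.
exact: (proj2 HR).
Qed.
End Hiso.
End Gen.

Section Gen2.
Variable K : nat.
Hypothesis K0 : 0 < K.

Lemma forth' (W : Type) (Rw : ('I_K -> W) -> Prop) ps x :
  is_khypergraph Rw -> exists y, hiso Rw ps -> hiso Rw ((x, y) :: ps).
Proof.
move=> HR; case: (classic (hiso Rw ps)) => [H|nH]; last by exists 0.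
have [y Hy] := forth HR x H; by exists y.
Qed.

Lemma hiso_nil (W : Type) (Rw : ('I_K -> W) -> Prop) : hiso Rw [::].
Proof. by split=> // z w /(_ (Ordinal K0)). Qed.

Lemma univ (V : finType) (R : ('I_K -> V) -> Prop) : is_khypergraph R ->
  exists g : V -> nat, injective g /\ forall a, R a <-> edgeH (g \o a).
Proof.
move=> HR.
have [fy Hfy] := dep_choice (fun ps => dep_choice (fun x => @forth' V R ps x HR)).
pose build := foldr (fun v ps => (v, fy ps v) :: ps) [::].
have Hb l : hiso R (build l) by elim: l => [|v l IH] /=; [exact: hiso_nil|exact: Hfy].
have Hm l v : v \in l -> exists b, in_list (v, b) (build l).
  elim: l => [|u l IH] //=; rewrite in_cons => /orP [/eqP ->|/IH [b Hb']].
    by exists (fy (build l) u); left.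
  by exists b; right.
pose ps := build (enum V).
have [Hp He] := Hb (enum V).
have gP v : in_list (v, partner ps v) ps.
  have [b Hb'] := Hm (enum V) v (mem_enum _ _); exact: partnerP Hb'.
exists (partner ps); split.
  by move=> v v' e; apply/(Hp _ _ _ _ (gP v) (gP v')); rewrite e.
move=> a; apply: He => i; exact: gP.
Qed.

Definition swap (q : nat * nat) := (q.2, q.1).

Lemma in_swap (ps : seq (nat * nat)) a b : in_list (a, b) (map swap ps) <-> in_list (b, a) ps.
Proof.
rewrite in_list_mapP; split=> [[[b' a'] [H [<- <-]]]|H] //; by exists (b, a).
Qed.

Lemma swapK (ps : seq (nat * nat)) : map swap (map swap ps) = ps.
Proof. by elim: ps => [|[a b] ps IH] //=; rewrite IH. Qed.

Lemma hiso_swap ps : hiso (@edgeH K) ps -> hiso (@edgeH K) (map swap ps).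
Proof.
move=> [Hp He]; split.
  move=> a b a' b' /in_swap H1 /in_swap H2; have := Hp _ _ _ _ H1 H2; tauto.
move=> z w H; rewrite (He w z) // => i; exact/in_swap.
Qed.

Lemma back ps y : exists x, hiso (@edgeH K) ps -> hiso (@edgeH K) ((x, y) :: ps).
Proof.
case: (classic (hiso (@edgeH K) ps)) => [H|nH]; last by exists 0.
have [x Hx] := forth (@edgeH_hyp K) y (hiso_swap H).
exists x => _; have := hiso_swap Hx; by rewrite /= swapK.
Qed.

Definition Hgen : structure (hypergraph_sig K) :=
  @Structure (hypergraph_sig K) nat (inhabits 0) (fun f : Empty_set => match f with end)
    (fun _ z => edgeH z).

Lemma Hgen_generic : generic_hypergraph Hgen.
Proof.
split; first exact: edgeH_hyp.
split; first by exists id.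
split; first by move=> V R HR; exact: univ.
move=> A p [s HA] pinj pedge.
have [fy Hfy] := dep_choice (fun ps => dep_choice (fun x => @forth' nat (@edgeH K) ps x (@edgeH_hyp K))).
have [bx Hbx] := dep_choice (fun ps => dep_choice (fun y => back ps y)).
pose ps0 := map (fun x => (x, p x)) s.
have H0 : hiso (@edgeH K) ps0.
  have P0 a b : in_list (a, b) ps0 -> A a /\ b = p a.
    by move/in_list_mapP => [x [xs [<- <-]]]; split=> //; apply/HA.
  split.
    move=> a b a' b' /P0 [Aa ->] /P0 [Aa' ->]; split=> [->//|]; exact: pinj.
  move=> z w Hzw.
  have -> : w = p \o z by apply: functional_extensionality => i; have [_ ->] := P0 _ _ (Hzw i).
  apply: (pedge z) => i; by have [] := P0 _ _ (Hzw i).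
pose stage := fix stage n := match n with
  | 0 => ps0
  | n'.+1 => let ps1 := (n', fy (stage n') n') :: stage n' in (bx ps1 n', n') :: ps1 end.
have Hs n : hiso (@edgeH K) (stage n).
  elim: n => [|n IH] //=; apply: Hbx; exact: Hfy.
have mono n m q : n <= m -> in_list q (stage n) -> in_list q (stage m).
  move=> nm Hq; elim: m nm => [|m IH]; first by rewrite leqn0 => /eqP <-.
  rewrite leq_eqVlt => /orP [/eqP <- //|]; rewrite ltnS => /IH H /=; by right; right.
pose sigma x := fy (stage x) x.
pose g y := bx ((y, fy (stage y) y) :: stage y) y.
have sP x : in_list (x, sigma x) (stage x.+1) by right; left.
have gP y : in_list (g y, y) (stage y.+1) by left.
have pf n a b a' b' : in_list (a, b) (stage n) -> in_list (a', b') (stage n) -> (a = a' <-> b = b').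
  by have [Hp _] := Hs n; apply: Hp.
have common n1 n2 q1 q2 : in_list q1 (stage n1) -> in_list q2 (stage n2) ->
    in_list q1 (stage (maxn n1 n2)) /\ in_list q2 (stage (maxn n1 n2)).
  by move=> H1 H2; split; [apply: mono H1; rewrite leq_maxl|apply: mono H2; rewrite leq_maxr].
exists sigma; split.
  exists g.
    move=> x; have [H1 H2] := common _ _ _ _ (sP x) (gP (sigma x)).
    by apply/(pf _ _ _ _ _ H2 H1).
  move=> y; have [H1 H2] := common _ _ _ _ (gP y) (sP (g y)).
  by apply/(pf _ _ _ _ _ H2 H1).
split.
  move=> x Ax.
  have Hx0 : in_list (x, p x) (stage 0) by apply/in_list_mapP; exists x; split=> //; apply/HA.
  have [H1 H2] := common _ _ _ _ Hx0 (sP x).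
  by apply/(pf _ _ _ _ _ H2 H1).
move=> a.
pose m := \max_(i < K) (a i).+1.
have Hm i : in_list (a i, sigma (a i)) (stage m).
  apply: mono (sP (a i)); exact: (leq_bigmax i).
have [_ He] := Hs m; exact: He.
Qed.
End Gen2.

Section PF.
Variable L : signature.

Definition J0 (P : pform L) : finType := ('I_(pnx P) + {i : 'I_(pk P) & 'I_(pny P i)})%type.
Definition vs0 (P : pform L) (x : J0 P) : nat :=
  match x with inl j => pvx P j | inr p => pvy P (projT1 p) (projT2 p) end.

Lemma vs0_inj P : injective (@vs0 P).
Proof. exact: pinj P. Qed.

Lemma vs0_free P v : free_in v (pphi P) -> exists x : J0 P, v = vs0 x.
Proof.
case/pfree => [[j ->]|[i [j ->]]]; [by exists (inl j)|by exists (inr (existT _ i j))].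
Qed.

Lemma env_exists (M : structure L) (J : finType) (vs : J -> nat) : injective vs ->
  forall (z : J -> M) (E0 : nat -> M), exists E : nat -> M, forall j, E (vs j) = z j.
Proof.
move=> inj z E0; exists (fun v => if [pick j | vs j == v] is Some j then z j else E0 v) => j.
case: pickP => [j' /eqP /inj -> //|/(_ j)]; by rewrite eqxx.
Qed.

Definition Z0 (M : structure L) (P : pform L) (z : J0 P -> M) :=
  forall E, (forall x, E (vs0 x) = z x) -> sat E (pphi P).

Lemma Z0_agree (M : structure L) P (z : J0 P -> M) (E : nat -> M) :
  (forall x, E (vs0 x) = z x) -> (Z0 z <-> sat E (pphi P)).
Proof.
move=> HE; split=> [H|H E' HE']; first exact: H.
rewrite (sat_free (E' := E)) // => v /vs0_free [x ->]; by rewrite HE HE'.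
Qed.

Lemma has_kIP_of_pat (M : structure L) P : pat M P nat -> has_kIP M (pk P) (pphi P).
Proof.
move=> pt; exists (pnx P), (pny P), (pvx P), (pvy P).
have inj := @vs0_inj P.
split; first by move=> j j' e; have := inj (inl j) (inl j') e => -[].
split; first by move=> i j j' e; have := inj (inr (existT _ i j)) (inr (existT _ i j')) e => -[] H; exact: inj_pair2 H.
split; first by move=> j i j' e; have := inj (inl j) (inr (existT _ i j')) e.
split; first by move=> i i' j j' nii e; have := inj (inr (existT _ i j)) (inr (existT _ i' j')) e => -[].
split; first exact: pfree.
exact: pt.
Qed.

Lemma pat_of_has_kIP (M : structure L) k phi : has_kIP M k phi ->
  exists P : pform L, pk P = k /\ pphi P = phi /\ pat M P nat.
Proof.
move=> [nx [ny [vx [vy [ivx [ivy [d1 [d2 [fr pt]]]]]]]]].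
have inj : injective (fun x : ('I_nx + {i : 'I_k & 'I_(ny i)})%type =>
            match x with inl j => vx j | inr p => vy (projT1 p) (projT2 p) end).
  move=> [j|[i j]] [j'|[i' j']] /= e.
  - by rewrite (ivx _ _ e).
  - by exfalso; apply: (d1 _ _ _ e).
  - by exfalso; apply: (d1 _ _ _ (esym e)).
  - case: (eqVneq i i') => [eii|nii]; last first.
      have nii' : i <> i' by move=> e'; move: nii; rewrite e' eqxx.
      by exfalso; exact: d2 _ _ _ _ nii' e.
    subst i'; by rewrite (ivy _ _ _ e).
exists (@PForm L k nx ny vx vy phi fr inj); split=> //; split=> //.
Qed.
End PF.

Section Transfer.
Variable L : signature.

Lemma pat_restrict (M : structure L) P l : pat M P nat -> pat M P 'I_l.
Proof.
move=> [b Hb]; exists (fun i t j => b i (val t) j) => S.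
pose S' (s : 'I_(pk P) -> nat) := exists t, S t /\ forall i, s i = val (t i).
have [a Ha] := Hb S'; exists a => t E Hx Hy.
rewrite (Ha (fun i => val (t i)) E Hx Hy); split=> [[t' [St' e]]|St]; last by exists t.
suff -> : t = t' by [].
apply: functional_extensionality => i; apply: val_inj; exact: e.
Qed.

Variables (P : pform L) (l : nat).
Definition Yb := {i : 'I_(pk P) & ('I_l * 'I_(pny P i))%type}.
Definition W1 := ('I_(pnx P) + Yb)%type.
Definition Sf := {ffun 'I_(pk P) -> 'I_l}.
Definition gs (s : Sf) (x : J0 P) : W1 :=
  match x with inl j => inl j | inr p => inr (existT _ (projT1 p) (s (projT1 p), projT2 p)) end.
Definition swp (x : W1) : (Yb + 'I_(pnx P))%type :=
  match x with inl j => inr j | inr y => inl y end.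
Definition comb' (M : Type) (u : Yb -> M) (a : 'I_(pnx P) -> M) (x : (Yb + 'I_(pnx P))%type) :=
  match x with inl y => u y | inr j => a j end.
Definition CS (M : structure L) (S : {set Sf}) (w : W1 -> M) :=
  forall s : Sf, if s \in S then Z0 ((w \o gs s)) else ~ Z0 (w \o gs s).
Definition Eall (M : structure L) (u : Yb -> M) :=
  forall S : {set Sf}, exists a : 'I_(pnx P) -> M, CS S ((comb' u a) \o swp).

Definition phi0 := substf (@vs0 L P) (@pos _) (pphi P).
Definition phis (s : Sf) := substf (@pos (J0 P)) (fun x => pos (gs s x)) phi0.
Definition phiC (S : {set Sf}) :=
  bigand (map (fun s => if s \in S then phis s else fneg (phis s)) (enum Sf)).
Definition phiD (S : {set Sf}) :=
  projf Yb 'I_(pnx P) (substf (@pos W1) (fun x => pos (swp x)) (phiC S)).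
Definition phiE := bigand (map phiD (enum {set Sf})).
Definition phiF := projf void Yb (substf (@pos Yb) (fun y => pos (inr y : (void + Yb)%type)) phiE).

Lemma rep_phi0 (M : structure L) : rep phi0 (@Z0 L M P).
Proof. exact: rep_base (@vs0_inj L P) (@vs0_free L P). Qed.

Lemma rep_phiC (M : structure L) S : rep (phiC S) (@CS M S).
Proof.
have H := @rep_bigand L M W1 Sf (fun s => if s \in S then phis s else fneg (phis s))
  (fun s w => if s \in S then Z0 (w \o gs s) else ~ Z0 (w \o gs s)).
apply: H => s; cbv beta; case: (s \in S).
  exact: (rep_pull (gs s) (rep_phi0 (M:=M))).
exact: (rep_neg (rep_pull (gs s) (rep_phi0 (M:=M)))).
Qed.

Lemma rep_phiD (M : structure L) S :
  rep (phiD S) (fun u : Yb -> M => exists a, CS S ((comb' u a) \o swp)).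
Proof. exact: (rep_proj (rep_pull swp (rep_phiC (M:=M) S))). Qed.

Lemma rep_phiE (M : structure L) : rep phiE (@Eall M).
Proof. exact: (rep_bigand (rep_phiD (M:=M))). Qed.

Lemma rep_phiF (M : structure L) : rep phiF (fun _ : void -> M => exists u : Yb -> M, Eall u).
Proof. exact: (rep_proj (rep_pull (fun y => inr y) (rep_phiE (M:=M)))). Qed.

Lemma sat_psi (M : structure L) (e : nat -> M) : sat e (close phiF) <-> exists u : Yb -> M, Eall u.
Proof.
rewrite sat_close; split=> [[g]|H]; first by rewrite rep_phiF.
by exists e; rewrite rep_phiF.
Qed.

Lemma pat_fin_iff (M : structure L) : pat M P 'I_l <-> exists u : Yb -> M, Eall u.
Proof.
case: (carrier_inhabited M) => x0.
split=> [[b Hb]|[u Hu]].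
  exists (fun y => b (projT1 y) (projT2 y).1 (projT2 y).2) => S.
  have [a Ha] := Hb (fun s => finfun s \in S).
  exists a => s.
  have [E HE] := env_exists (@vs0_inj L P) ((comb' (fun y => b (projT1 y) (projT2 y).1 (projT2 y).2) a \o swp) \o gs s) (fun _ => x0).
  have := Ha (fun i => s i) E (fun j => HE (inl j)) (fun i j => HE (inr (existT _ i j))).
  rewrite ffunK => H; case: (s \in S) H => H; rewrite (Z0_agree HE) H //.
exists (fun i t j => u (existT _ i (t, j))) => S.
have [a Ha] := Hu [set s : Sf | decide (S s)].
exists a => s E Hx Hy.
have := Ha (finfun s); rewrite inE.
have HE : forall x, E (vs0 x) = ((comb' u a \o swp) \o gs (finfun s)) x.
  by move=> [j|[i j]] /=; rewrite ?Hx ?Hy ?ffunE.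
have -> : (finfun s : _ -> _) = s by apply: functional_extensionality => i; rewrite ffunE.
case: (boolP (decide (S s))) => [/decideP Ss|/negP nS] H.
  by rewrite -(Z0_agree HE); split.
rewrite -(Z0_agree HE); split=> // Ss; exfalso; apply: nS; exact/decideP.
Qed.
End Transfer.

Lemma transfer (L : signature) (T : theory L) (N1 N2 : structure L) (P : pform L) l :
  complete_theory T -> model T N1 -> model T N2 -> pat N1 P 'I_l -> pat N2 P 'I_l.
Proof.
move=> [_ [_ Hc]] M1 M2 p1.
case: (carrier_inhabited N1) => x1; case: (carrier_inhabited N2) => x2.
case: (Hc _ (@close_sentence L (phiF P l))) => H.
  apply/pat_fin_iff; apply/(@sat_psi L P l N2 (fun _ => x2)); exact: H.
exfalso; apply: (H N1 M1 (fun _ => x1)); apply/(@sat_psi L P l N1 (fun _ => x1)); exact/pat_fin_iff.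
Qed.

Lemma rep_const (L : signature) (N : structure L) (J : finType) (Q : Prop) :
  exists phi, rep phi (fun _ : J -> N => Q).
Proof.
case: (classic Q) => q; [exists (ftrue L)|exists (ffalse L)] => E /=; split=> //.

Qed.

Lemma ltd_zero (L L' : signature) (N : structure L) (M : structure L') (X : ('I_0 -> M) -> Prop) :
  exists (n : nat) (f : 'I_n -> M -> N) (idx : 'I_n -> 'I_0) (Y : ('I_n -> N) -> Prop),
    definable Y /\ forall a : 'I_0 -> M, X a <-> Y (fun j => f j (a (idx j))).
Proof.
case: (carrier_inhabited M) => x0; case: (carrier_inhabited N) => y0.
have [phi Hphi] := @rep_const L N 'I_0 (X (fun _ => x0)).
exists 0, (fun _ _ => y0), id, (fun _ => X (fun _ => x0)); split.
  exact: rep_definable Hphi.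
move=> a; suff -> : a = (fun _ => x0) by [].
by apply: functional_extensionality => -[].
Qed.

Lemma ltd_succ (L L' : signature) (N : structure L) (M : structure L') (P : pform L) m
  (X : ('I_m.+1 -> M) -> Prop) : pk P = m.+1 -> pat N P M ->
  exists (n : nat) (f : 'I_n -> M -> N) (idx : 'I_n -> 'I_m.+1) (Y : ('I_n -> N) -> Prop),
    definable Y /\ forall a : 'I_m.+1 -> M, X a <-> Y (fun j => f j (a (idx j))).
Proof.
case: P => k nx ny vx vy phi fr inj /= Pk; subst k => -[b Hb].
case: (carrier_inhabited M) => x0.
pose P := @PForm L m.+1 nx ny vx vy phi fr inj.
pose SX (a0 : M) (s : 'I_m.+1 -> M) := s ord_max = x0 /\
  X (fun p => match unlift ord0 p with None => a0 | Some i => s (widen_ord (leqnSn m) i) end).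
have [aof Haof] := dep_choice Hb.
pose coordOf (i : 'I_m.+1) : 'I_m.+1 := if i == ord_max then ord0 else inord i.+1.
pose n := #|J0 P|.
pose f (c : 'I_n) (x : M) : N := match enum_val c with
  | inl j => aof (SX x) j
  | inr p => b (projT1 p) (if projT1 p == ord_max then x0 else x) (projT2 p) end.
pose idx (c : 'I_n) : 'I_m.+1 := match enum_val c with inl _ => ord0 | inr p => coordOf (projT1 p) end.
exists n, f, idx, (fun w => Z0 (w \o enum_rank)); split.
  apply: rep_definable; exact: (rep_pull enum_rank (@rep_phi0 L P N)).
move=> a.
pose s (i : 'I_m.+1) := if i == ord_max then x0 else a (coordOf i).
pose z (x : J0 P) : N := match x with
  | inl j => aof (SX (a ord0)) j
  | inr p => b (projT1 p) (s (projT1 p)) (projT2 p) end.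
have -> : ((fun j => f j (a (idx j))) \o enum_rank) = z.
  apply: functional_extensionality => x /=; rewrite /f /idx enum_rankK.
  case: x => [j|[i j]] //=; rewrite /s; by case: (i == ord_max).
case: (carrier_inhabited N) => y0.
have [E HE] := env_exists (@vs0_inj L P) z (fun _ => y0).
rewrite (Z0_agree HE) (Haof (SX (a ord0)) s E (fun j => HE (inl j)) (fun i j => HE (inr (existT _ i j)))).
rewrite /SX /s eqxx.
have eqf : (fun p => match unlift ord0 p with None => a ord0
    | Some i => if widen_ord (leqnSn m) i == ord_max then x0 else a (coordOf (widen_ord (leqnSn m) i)) end) = a.
  apply: functional_extensionality => p; case: unliftP => [i ->|->] //.
  have -> : (widen_ord (leqnSn m) i == ord_max) = false by rewrite -val_eqE /= ltn_eqF.
  rewrite /coordOf; have -> : (widen_ord (leqnSn m) i == ord_max) = false by rewrite -val_eqE /= ltn_eqF.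
  congr a; apply: val_inj; by rewrite /= inordK // ltnS ltn_ord.
rewrite eqf; tauto.
Qed.

Lemma IP_to_LTD (L : signature) (T : theory L) : complete_theory T -> infinite_IP T ->
  forall (L' : signature) (M : structure L'), theory_locally_trace_defines T M.
Proof.
move=> CT HIP L' M.
have HP : forall m, exists P : pform L, pk P = m.+1 /\ exists N, model T N /\ pat N P nat.
  move=> m; have [N [phi [MN Hk]]] := HIP m.+1 isT.
  have [P [Pk [_ Pp]]] := pat_of_has_kIP Hk.
  by exists P; split=> //; exists N.
have [Ps HPs] := dep_choice HP.
have [_ [[N0 MN0] _]] := CT.
have fin : forall m l, pat N0 (Ps m) 'I_l.
  move=> m l; have [_ [N [MN Hp]]] := HPs m.
  exact: transfer CT MN MN0 (pat_restrict l Hp).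
have [N' [MN' HN']] := stretch MN0 fin M.
exists N'; split=> //.
exists (fun _ => True) => m X _.
case: m X => [|m] X.
  have [n [f [idx [Y [DY HY]]]]] := ltd_zero N' X.
  by exists n, f, idx, Y.
have [n [f [idx [Y [DY HY]]]]] := ltd_succ X (proj1 (HPs m)) (HN' m).
by exists n, f, idx, Y.
Qed.

Lemma nth_inj (s : seq nat) : uniq s -> injective (fun j : 'I_(size s) => nth 0 s j).
Proof. move=> us i j /eqP; rewrite nth_uniq // => /eqP; exact: val_inj. Qed.

Lemma nth_mem (s : seq nat) (j : 'I_(size s)) : nth 0 s j \in s.
Proof. exact: mem_nth. Qed.

Lemma nth_surj (s : seq nat) v : v \in s -> exists j : 'I_(size s), v = nth 0 s j.
Proof. move=> vs; exists (Ordinal (etrans (index_mem v s) vs)); by rewrite /= nth_index. Qed.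

Definition Mk_carrier (k : nat) := (nat + (('I_k -> nat) -> Prop))%type.

Definition Mk (k : nat) : structure (hypergraph_sig k.+1) :=
  @Structure (hypergraph_sig k.+1) (Mk_carrier k) (inhabits (inl 0))
    (fun f : Empty_set => match f with end)
    (fun _ z => exists S, z ord0 = inr S /\ exists s, (forall i, z (lift ord0 i) = inl (s i)) /\ S s).

Lemma LTD_to_IP (L : signature) (T : theory L) :
  (forall (L' : signature) (M : structure L'), theory_locally_trace_defines T M) -> infinite_IP T.
Proof.
move=> H k _.
have [N [MN [Ec HE]]] := H _ (Mk k).
pose X (z : 'I_k.+1 -> Mk k) := @rel_interp _ (Mk k) tt z.
have DX : definable X.
  apply: (@rep_definable _ _ _ (@Defs.frel (hypergraph_sig k.+1) tt (fun j => tvar _ (pos j)))).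
  by move=> E.
have [n [f [idx [Y [_ [[phi [e HY]] HX]]]]]] := HE k.+1 X DX.
exists N, phi; split=> //.
pose n' := #|'I_n|.
pose B := maxvar phi.
pose sx := [seq pos j | j <- enum 'I_n & idx j == ord0] ++ [seq n' + p | p <- iota 0 B.+1].
pose sy (i : 'I_k) := [seq pos j | j <- enum 'I_n & idx j == lift ord0 i].
have mem_sx v : v \in sx <-> (exists c, idx c = ord0 /\ v = pos c) \/ (n' <= v <= n' + B).
  rewrite mem_cat; split.
    case/orP=> [/mapP [c]|/mapP [p]].
      by rewrite mem_filter => /andP [/eqP H1 _] ->; left; exists c.
    rewrite mem_iota add0n => /andP [_ Hp] ->; right; rewrite leq_addr /= leq_add2l -ltnS //.
  case=> [[c [H1 ->]]|/andP [H1 H2]]; apply/orP; [left|right].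
    apply: map_f; by rewrite mem_filter H1 eqxx mem_enum.
  apply/mapP; exists (v - n'); last by rewrite subnKC.
  by rewrite mem_iota add0n /= ltnS leq_subLR.
have mem_sy i v : v \in sy i <-> exists c, idx c = lift ord0 i /\ v = pos c.
  split; first by move/mapP=> [c]; rewrite mem_filter => /andP [/eqP H1 _] ->; exists c.
  move=> [c [H1 ->]]; apply: map_f; by rewrite mem_filter H1 eqxx mem_enum.
have pos_lt' (c : 'I_n) : pos c < n' by exact: pos_lt.
have usx : uniq sx.
  rewrite cat_uniq; apply/and3P; split.
  - rewrite map_inj_uniq; [apply: filter_uniq; exact: enum_uniq|exact: pos_inj].
  - apply/hasP => -[v /mapP [p _ ->] /mapP [c _ e0]]; move: (pos_lt' c); by rewrite -e0 ltnNge leq_addr.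
  - rewrite map_inj_uniq; [exact: iota_uniq|by move=> a b /eqP; rewrite eqn_add2l => /eqP].
have usy i : uniq (sy i).
  rewrite map_inj_uniq; [apply: filter_uniq; exact: enum_uniq|exact: pos_inj].
pose envf (z : 'I_k.+1 -> Mk k) := tuple_env (fun c => f c (z (idx c))) e.
pose bb (i : 'I_k) (s : nat) (j : 'I_(size (sy i))) := envf (fun _ => inl s) (nth 0 (sy i) j).
exists (size sx), (fun i => size (sy i)), (fun j => nth 0 sx j), (fun i j => nth 0 (sy i) j).
split; first exact: nth_inj.
split; first by move=> i; exact: nth_inj.
split.
  move=> j i j' e'.
  have /mem_sx := nth_mem j; have /mem_sy := nth_mem j'; rewrite -e'.
  move=> [c [Hc ->]] [[c' [Hc' /pos_inj ec]]|/andP [H1 _]].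
    by subst c'; move: Hc; rewrite Hc' => /eqP; rewrite (negbTE (neq_lift _ _)).
  by move: (pos_lt' c); rewrite ltnNge H1.
split.
  move=> i i' j j' nii e'.
  have /mem_sy [c [Hc ec]] := nth_mem j; have /mem_sy [c' [Hc' ec']] := nth_mem j'.
  move: e'; rewrite ec ec' => /pos_inj ecc; subst c'; apply: nii; apply: (@lift_inj k.+1 ord0); by rewrite -Hc -Hc'.
split.
  move=> v /free_maxvar vB.
  case: (ltnP v n') => [vn|nv].
    pose c := enum_val (Ordinal vn).
    have pc : pos c = v by rewrite /pos /c enum_valK.
    case: (unliftP ord0 (idx c)) => [i Hi|Hi].
      right; exists i; apply: nth_surj; apply/mem_sy; by exists c.
    left; apply: nth_surj; apply/mem_sx; left; by exists c.
  left; apply: nth_surj; apply/mem_sx; right; by rewrite nv /= (leq_trans vB) // leq_addl.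
exists bb => S.
exists (fun j => envf (fun _ => inr S) (nth 0 sx j)) => s E Hx Hy.
pose z (p : 'I_k.+1) : Mk k := match unlift ord0 p with None => inr S | Some i => inl (s i) end.
have envc zz (c : 'I_n) : envf zz (pos c) = f c (zz (idx c)) by exact: tuple_env_pos.
have envb zz v : n' <= v -> envf zz v = e v by move=> Hv; exact: tuple_env_big.
have -> : sat E phi <-> sat (envf z) phi.
  apply: sat_free => v /free_maxvar vB.
  case: (ltnP v n') => [vn|nv]; last first.
    have [j ->] : exists j : 'I_(size sx), v = nth 0 sx j.
      by apply: nth_surj; apply/mem_sx; right; rewrite nv /= (leq_trans vB) // leq_addl.
    rewrite Hx; have /mem_sx [[c [Hc ->]]|/andP [H1 _]] := nth_mem j.
      by rewrite !envc Hc /z unlift_none.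
    by rewrite !envb.
  pose c := enum_val (Ordinal vn).
  have pc : pos c = v by rewrite /pos /c enum_valK.
  rewrite -pc; case: (unliftP ord0 (idx c)) => [i Hi|Hi].
    have [j ej] : exists j : 'I_(size (sy i)), pos c = nth 0 (sy i) j.
      apply: nth_surj; apply/mem_sy; by exists c.
    rewrite ej Hy -ej /bb -ej !envc Hi /z liftK //.
  have [j ej] : exists j : 'I_(size sx), pos c = nth 0 sx j.
    apply: nth_surj; apply/mem_sx; left; by exists c.
  by rewrite ej Hx -ej !envc Hi /z unlift_none.
rewrite -HY -HX /X /= /z unlift_none; split.
  move=> [S' [[<-] [s' [Hs' Ss']]]]; suff -> : s = s' by [].
  apply: functional_extensionality => i; move: (Hs' i); by rewrite liftK => -[].
move=> Ss; exists S; split=> //; exists s; split=> // i; by rewrite liftK.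
Qed.

Lemma in_list_mem (T : eqType) (x : T) l : x \in l -> in_list x l.
Proof.
elim: l => [|y l IH] //=; rewrite in_cons => /orP [/eqP ->|H]; first by left.
right; exact: IH.
Qed.

Lemma decide_eq (P Q : Prop) : decide P = decide Q -> (P <-> Q).
Proof.
rewrite /decide; case: excluded_middle_informative; case: excluded_middle_informative => //.
Qed.

Section Aut.
Variables (K : nat) (H : structure (hypergraph_sig K)).

Lemma eval_aut (sg : H -> H) (E : nat -> H) t : eval_term (sg \o E) t = sg (eval_term E t).
Proof. case: t => [v|f ts] //=; case: f ts. Qed.

Lemma sat_aut (sg : H -> H) : bijective sg -> (forall z, hedge H z <-> hedge H (sg \o z)) ->
  forall phi (E : nat -> H), sat E phi <-> sat (sg \o E) phi.
Proof.
move=> [sg' c1 c2] Hz phi; elim: phi => [t u|r ts|p IH|p IHp q IHq|x p IH] E /=.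
- rewrite !eval_aut; split=> [->//|]; exact: (can_inj c1).
- case: r ts => ts; have h := Hz (fun j => eval_term E (ts j)).
  have e2 : (sg \o (fun j => eval_term E (ts j))) = (fun j => eval_term (sg \o E) (ts j)).
    apply: functional_extensionality => j /=; by rewrite eval_aut.
  rewrite e2 in h; exact: h.
- by rewrite IH.
- by rewrite IHp IHq.
- have updE v : sg \o upd E x v = upd (sg \o E) x (sg v).
    apply: functional_extensionality => w; rewrite /upd /=; by case: (w == x).
  split=> [[v Hv]|[v Hv]].
    exists (sg v); rewrite -updE -IH //.
  exists (sg' v); rewrite IH updE c2 //.
Qed.
End Aut.

Section QE1.
Variables (K : nat) (H : structure (hypergraph_sig K)).
Hypothesis HG : generic_hypergraph H.
Variables (m B : nat) (cpar : 'I_B.+1 -> H).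
Definition Pt : finType := ('I_m + 'I_B.+1)%type.
Definition pt (a : 'I_m -> H) (u : Pt) : H := match u with inl i => a i | inr p => cpar p end.
Definition Atom : finType := ((Pt * Pt) + {ffun 'I_K -> Pt})%type.
Definition qtp (a : 'I_m -> H) : {ffun Atom -> bool} :=
  [ffun al => match al with
   | inl uu => decide (pt a (uu : Pt * Pt).1 = pt a (uu : Pt * Pt).2)
   | inr zz => decide (hedge H (fun i => pt a ((zz : {ffun 'I_K -> Pt}) i))) end].

Lemma qtp_aut (a a' : 'I_m -> H) : qtp a = qtp a' ->
  exists sg : H -> H, bijective sg /\ (forall z, hedge H z <-> hedge H (sg \o z)) /\
    forall u, sg (pt a u) = pt a' u.
Proof.
move=> eq.
have Heq u u' : pt a u = pt a u' <-> pt a' u = pt a' u'.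
  apply: decide_eq; have := congr1 (fun f : {ffun Atom -> bool} => f (inl (u, u') : Atom)) eq; by rewrite !ffunE.
have Hed (zz : {ffun 'I_K -> Pt}) : hedge H (fun i => pt a (zz i)) <-> hedge H (fun i => pt a' (zz i)).
  apply: decide_eq; have := congr1 (fun f : {ffun Atom -> bool} => f (inr zz : Atom)) eq; by rewrite !ffunE.
pose p x := if [pick u | decide (pt a u = x)] is Some u then pt a' u else x.
have pP u : p (pt a u) = pt a' u.
  rewrite /p; case: pickP => [u0 /decideP /Heq //|/(_ u)].
  by have -> : decide (pt a u = pt a u) = true by apply/decideP.
have [_ [_ [_ Hhom]]] := HG.
have h1 : exists s, forall x, (exists u, pt a u = x) <-> in_list x s.
  exists (map (pt a) (enum Pt)) => x; rewrite in_list_mapP; split=> [[u <-]|[u [_ <-]]].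
    by exists u; split=> //; apply: in_list_mem; rewrite mem_enum.
  by exists u.
have h2 : forall x y, (exists u, pt a u = x) -> (exists u, pt a u = y) -> p x = p y -> x = y.
  move=> x y [u <-] [u' <-]; rewrite !pP; by move/Heq.
have h3 : forall zt : 'I_K -> H, (forall j, exists u, pt a u = zt j) -> (hedge H zt <-> hedge H (p \o zt)).
  move=> zt Azt; have [uu Huu] := dep_choice Azt.
  have -> : zt = (fun i => pt a (finfun uu i)) by apply: functional_extensionality => i; rewrite ffunE.
  rewrite Hed; suff -> : (p \o (fun i => pt a (finfun uu i))) = (fun i => pt a' (finfun uu i)) by [].
  apply: functional_extensionality => i /=; by rewrite pP.
have [sg [bij [ext edges]]] := Hhom (fun x => exists u, pt a u = x) p h1 h2 h3.
exists sg; split=> //; split=> // u; rewrite ext ?pP //; by exists u.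
Qed.

Lemma qtp_X (psi : formula (hypergraph_sig K)) (e : nat -> H) (X : ('I_m -> H) -> Prop) :
  (forall a, X a <-> sat (tuple_env a e) psi) -> maxvar psi <= #|'I_m| + B ->
  (forall p, cpar p = e (#|'I_m| + p)) ->
  forall a a', qtp a = qtp a' -> X a -> X a'.
Proof.
move=> HX mB ce a a' /qtp_aut [sg [bij [edges Hsg]]].
rewrite !HX (sat_aut bij edges) => Hs.
rewrite (sat_free (E' := sg \o tuple_env a e)) // => v /free_maxvar vB.
case: (ltnP v #|'I_m|) => [vm|mv].
  pose c := enum_val (Ordinal vm : 'I_#|'I_m|).
  have pc : pos c = v by rewrite /pos /c enum_valK.
  rewrite -pc /= !tuple_env_pos; exact: (esym (Hsg (inl c))).
have pB : v - #|'I_m| < B.+1 by rewrite ltnS leq_subLR (leq_trans vB).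
rewrite /= !tuple_env_big //.
by have := Hsg (inr (Ordinal pB)); rewrite /= ce subnKC // => ->.
Qed.
End QE1.

Lemma IP_to_TD (L : signature) (T : theory L) : infinite_IP T ->
  forall k : nat, 2 <= k -> forall H : structure (hypergraph_sig k), generic_hypergraph H ->
    theory_trace_defines T H.
Proof.
move=> HIP [|[|k']] // _ H HG.
have [N [phi [MN Hk]]] := HIP k'.+1 isT.
have [P0 [Pk [_ Pp]]] := pat_of_has_kIP Hk.
case: P0 Pk Pp => kk nx ny vx vy phiP fr inj /= Pk; subst kk => -[b Hb].
pose P := @PForm L k'.+1 nx ny vx vy phiP fr inj.
have [aof Haof] := dep_choice Hb.
have [_ [[fH finj] _]] := HG.
case: (carrier_inhabited N) => y0.
pose consv (v : H) (w : 'I_k'.+1 -> H) (p : 'I_k'.+2) := match unlift ord0 p with None => v | Some i => w i end.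
pose Sv (v : H) (s : 'I_k'.+1 -> nat) := exists w, (forall i, fH (w i) = s i) /\ hedge H (consv v w).
pose tau0 (v : H) (x : J0 P) : N := match x with
  | inl j => aof (Sv v) j | inr p => b (projT1 p) (fH v) (projT2 p) end.
pose n := #|J0 P|.
pose tau (v : H) (c : 'I_n) := tau0 v (enum_val c).
have edgeZ (z : 'I_k'.+2 -> H) : hedge H z <-> Z0 (P := P) (fun x => match x with
    | inl j => tau0 (z ord0) (inl j) | inr p => tau0 (z (lift ord0 (projT1 p))) (inr p) end).
  have [E HE] := env_exists (@vs0_inj L P) (fun x => match x with
    | inl j => tau0 (z ord0) (inl j) | inr p => tau0 (z (lift ord0 (projT1 p))) (inr p) end) (fun _ => y0).
  rewrite (Z0_agree HE) (Haof (Sv (z ord0)) (fun i => fH (z (lift ord0 i))) E (fun j => HE (inl j))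
    (fun i j => HE (inr (existT _ i j)))).
  have cz : consv (z ord0) (fun i => z (lift ord0 i)) = z.
    apply: functional_extensionality => p; rewrite /consv; by case: unliftP => [i ->|->].
  split=> [Hz|[w [Hw Hh]]]; first by exists (fun i => z (lift ord0 i)); rewrite cz.
  suff e : w = (fun i => z (lift ord0 i)) by rewrite e cz in Hh.
  apply: functional_extensionality => i; apply: finj; exact: Hw.
have b_inj i s1 s2 : (forall j, b i s1 j = b i s2 j) -> s1 = s2.
  move=> Hbs; pose S := fun s : 'I_k'.+1 -> nat => s i = s1.
  pose s := fun i' => if i' == i then s1 else 0.
  pose s' := fun i' => if i' == i then s2 else 0.
  have [E HE] := env_exists (@vs0_inj L P) (fun x : J0 P => match x with
    | inl j => aof S j | inr p => b (projT1 p) (s (projT1 p)) (projT2 p) end) (fun _ => y0).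
  have h1 := Haof S s E (fun j => HE (inl j)) (fun i' j => HE (inr (existT _ i' j))).
  have h2 := Haof S s' E (fun j => HE (inl j)).
  have : S s' .
    apply/h2; first last.
      apply/h1; by rewrite /S /s eqxx.
    move=> i' j; rewrite (HE (inr (existT _ i' j))) /= /s /s'; case: eqP => [e0|//]; subst i'; exact: Hbs.
  by rewrite /S /s' eqxx.
have tau_inj : injective tau.
  move=> v v' e; apply: finj; apply: (b_inj ord0) => j.
  have := congr1 (fun f => f (enum_rank (inr (existT _ ord0 j) : J0 P))) e.
  by rewrite /tau enum_rankK.
exists N; split=> //; exists n, tau => m X [psi [e HX]].
pose B := maxvar psi.
pose cpar (p : 'I_B.+1) := e (#|'I_m| + p).
pose W := ('I_m * 'I_n + 'I_B.+1 * 'I_n)%type.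
pose coord (u : Pt m B) (c : 'I_n) : W := match u with inl i => inl (i, c) | inr p => inr (p, c) end.
pose atomN (w : W -> N) (al : Atom k'.+2 m B) : Prop := match al with
  | inl uu => forall c, w (coord (uu : Pt m B * Pt m B).1 c) = w (coord uu.2 c)
  | inr zz => Z0 (P := P) (fun x => match x with
      | inl j => w (coord ((zz : {ffun 'I_k'.+2 -> Pt m B}) ord0) (enum_rank (inl j : J0 P)))
      | inr p => w (coord (zz (lift ord0 (projT1 p))) (enum_rank (inr p : J0 P))) end) end.
pose Good (t : {ffun Atom k'.+2 m B -> bool}) := exists a0, X a0 /\ qtp cpar a0 = t.
pose Yfull (w : W -> N) := exists t, Good t /\ forall al, atomN w al <-> t al = true.
pose wa (a : 'I_m -> H) := fun x : W => match x with inl q => tau (a q.1) q.2 | inr q => tau (cpar q.1) q.2 end.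
have Hpt a u c : wa a (coord u c) = tau (pt cpar a u) c by case: u.
have atom_eq a al : atomN (wa a) al <-> qtp cpar a al = true.
  case: al => [[u u']|zz]; rewrite ffunE /= decideP.
    split=> [h|h c]; last by rewrite !Hpt h.
    apply: tau_inj; apply: functional_extensionality => c; move: (h c); by rewrite !Hpt.
  rewrite (edgeZ (fun i => pt cpar a (zz i))).
  suff -> : (fun x : J0 P => match x with
      | inl j => wa a (coord (zz ord0) (enum_rank (inl j : J0 P)))
      | inr p => wa a (coord (zz (lift ord0 (projT1 p))) (enum_rank (inr p : J0 P))) end) =
    (fun x => match x with
      | inl j => tau0 (pt cpar a (zz ord0)) (inl j)
      | inr p => tau0 (pt cpar a (zz (lift ord0 (projT1 p)))) (inr p) end) by [].
  apply: functional_extensionality => -[j|p]; by rewrite Hpt /tau enum_rankK.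
have repA (al : Atom k'.+2 m B) : exists F, rep (M := N) (J := W) F (fun w => atomN w al).
  case: al => [[u u']|zz].
    pose g c (q : 'I_2) := if q == ord0 then coord u c else coord u' c.
    exists (bigand (map (fun c => substf (@pos 'I_2) (fun q => pos (g c q))
      (fequal (tvar L (pos (ord0 : 'I_2))) (tvar L (pos (ord_max : 'I_2))))) (enum 'I_n))).
    apply: rep_bigand => c.
    have r2 : rep (M := N) (J := 'I_2) (fequal (tvar L (pos (ord0 : 'I_2))) (tvar L (pos (ord_max : 'I_2))))
      (fun z => z ord0 = z ord_max) by move=> E.
    apply: (rep_ext _ (rep_pull (g c) r2)) => z.
    by rewrite /g /=.
  pose gEd (x : J0 P) : W := match x with
    | inl j => coord (zz ord0) (enum_rank (inl j : J0 P))
    | inr p => coord (zz (lift ord0 (projT1 p))) (enum_rank (inr p : J0 P)) end.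
  exists (substf (@pos (J0 P)) (fun x => pos (gEd x)) (phi0 P)).
  have r3 := rep_pull gEd (@rep_phi0 L P N).
  apply: (rep_ext _ r3) => z.
  suff -> : z \o gEd = (fun x => match x with
      | inl j => z (coord (zz ord0) (enum_rank (inl j : J0 P)))
      | inr p => z (coord (zz (lift ord0 (projT1 p))) (enum_rank (inr p : J0 P))) end) by [].
  by apply: functional_extensionality => -[j|p].
have [FA HFA] := dep_choice repA.
have repT (t : {ffun Atom k'.+2 m B -> bool}) : exists F, rep (M := N) (J := W) F
    (fun w => Good t /\ forall al, if t al then atomN w al else ~ atomN w al).
  have [Fg Hg] := @rep_const L N W (Good t).
  exists (fand Fg (bigand (map (fun al => if t al then FA al else fneg (FA al)) (enum (Atom k'.+2 m B))))).
  apply: rep_and Hg _; apply: rep_bigand => al; cbv beta.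
  case: (t al); [exact: HFA|exact: rep_neg (HFA al)].
have [FT HFT] := dep_choice repT.
have repY : rep (M := N) (J := W) (fneg (bigand (map (fun t => fneg (FT t)) (enum {ffun Atom k'.+2 m B -> bool})))) Yfull.
  apply: (rep_ext _ (rep_neg (rep_bigand (fun t => rep_neg (HFT t))))) => w; split.
    move=> h; apply: NNPP => nY; apply: h => t [Gt Hal]; apply: nY; exists t; split=> // al.
    move: (Hal al); case: (t al) => // H1; split=> // H2; exfalso; exact: H1 H2.
  move=> [t [Gt Hal]] h; apply: (h t); split=> // al.
  case e0: (t al); first by apply/Hal.
  by move/Hal; rewrite e0.
have DY := rep_definable_par (fun q : 'I_B.+1 * 'I_n => tau (cpar q.1) q.2) repY.
exists (fun a' => Yfull (fun x => match x with inl i => a' i | inr kk => tau (cpar kk.1) kk.2 end)).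
split=> // a; split=> [Xa|[t [[a0 [Xa0 qa0]] Hal]]].
  by exists (qtp cpar a); split; [exists a|exact: atom_eq].
have qa : qtp cpar a = t.
  apply/ffunP => al; have h := iff_trans (iff_sym (atom_eq a al)) (Hal al).
  case: (qtp cpar a al) h; case: (t al) => // h; [by have := proj1 h erefl|by have := proj2 h erefl].
exact: (qtp_X HG HX (leq_addl _ _) (fun p => erefl) (etrans qa0 (esym qa)) Xa0).
Qed.

Section Canon.
Variables (k l : nat).
Definition Vt : finType := ('I_k * 'I_l + {set {ffun 'I_k -> 'I_l}})%type.
Definition canon (S : {set {ffun 'I_k -> 'I_l}}) (s : {ffun 'I_k -> 'I_l}) (p : 'I_k.+1) : Vt :=
  match unlift ord0 p with None => inr S | Some i => inl (i, s i) end.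
Definition Rc (z : 'I_k.+1 -> Vt) :=
  exists (S : {set {ffun 'I_k -> 'I_l}}) (s : {ffun 'I_k -> 'I_l}) (sg : {perm 'I_k.+1}), s \in S /\ forall p, z p = canon S s (sg p).

Lemma canon_inj S s : injective (canon S s).
Proof.
move=> p q; rewrite /canon.
case: (unliftP ord0 p) => [i ->|->]; case: (unliftP ord0 q) => [i' ->|->] //.
by case=> -> _.
Qed.

Lemma Rc_hyp : is_khypergraph Rc.
Proof.
split.
  move=> z [S [s [sg [_ Hz]]]] p q; rewrite !Hz => /canon_inj; exact: perm_inj.
move=> z s' [S [s [sg [Ss Hz]]]]; exists S, s, (s' * sg)%g; split=> // p.
by rewrite /= Hz permM.
Qed.

Lemma Rc_canon S s : Rc (canon S s) <-> s \in S.
Proof.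
split; last first.
  move=> Ss; exists S, s, 1%g; split=> // p; by rewrite perm1.
move=> [S0 [s0 [sg [Ss0 Hz]]]].
have sg0 : sg ord0 = ord0.
  move: (Hz ord0); rewrite {1}/canon unlift_none /canon.
  by case: (unliftP ord0 (sg ord0)) => [i ->|->].
have e0 : S = S0 by move: (Hz ord0); rewrite /canon unlift_none sg0 unlift_none => -[].
have -> : s = s0.
  apply/ffunP => i; move: (Hz (lift ord0 i)); rewrite /canon liftK.
  case: (unliftP ord0 (sg (lift ord0 i))) => [i' e|e].
    by case=> -> ->.
  by have := perm_inj (etrans e (esym sg0)) => /eqP; rewrite eq_sym (negbTE (neq_lift _ _)).
by rewrite e0.
Qed.
End Canon.

Lemma TD_to_IP (L : signature) (T : theory L) :
  (forall k : nat, 2 <= k -> forall H : structure (hypergraph_sig k), generic_hypergraph H ->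
     theory_trace_defines T H) -> infinite_IP T.
Proof.
move=> H3 k k1.
have HG := Hgen_generic (ltn0Sn k).
have [N [MN [n [tau Htau]]]] := H3 k.+1 k1 (Hgen k.+1) HG.
pose X (z : 'I_k.+1 -> Hgen k.+1) := @rel_interp _ (Hgen k.+1) tt z.
have DX : definable X.
  apply: (@rep_definable _ _ _ (@Defs.frel (hypergraph_sig k.+1) tt (fun j => tvar _ (pos j)))).
  by move=> E.
have [Y [[phi [e HY]] HX]] := Htau k.+1 X DX.
pose I := ('I_k.+1 * 'I_n)%type.
pose n' := #|{: I}|.
pose B := maxvar phi.
pose pvx (x : 'I_(n + B.+1)) := match split x with inl j => pos ((ord0, j) : I) | inr p => n' + p end.
pose pvy (i : 'I_k) (j : 'I_n) := pos ((lift ord0 i, j) : I).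
have sl j : split (lshift B.+1 j) = inl j := unsplitK (inl j).
have sr p : split (rshift n p) = inr p := unsplitK (inr p).
have fr : forall v, free_in v phi -> (exists j, v = pvx j) \/ (exists i j, v = pvy i j).
  move=> v /free_maxvar vB; case: (ltnP v n') => [vn|nv].
    pose c := enum_val (Ordinal vn : 'I_#|{: I}|).
    have pc : pos c = v by rewrite /pos /c enum_valK.
    rewrite -pc; case: c pc => r j pc; case: (unliftP ord0 r) => [i ->|->].
      by right; exists i, j.
    by left; exists (lshift B.+1 j); rewrite /pvx sl.
  have pB : v - n' < B.+1 by rewrite ltnS leq_subLR (leq_trans vB) // leq_addl.
  left; exists (rshift n (Ordinal pB)); by rewrite /pvx sr /= subnKC.
have inj : injective (fun x : ('I_(n + B.+1) + {i : 'I_k & 'I_((fun _ => n) i)})%type =>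
            match x with inl j => pvx j | inr p => pvy (projT1 p) (projT2 p) end).
  have hx x : (exists j, split x = inl j /\ pvx x = pos ((ord0, j) : I)) \/
              (exists p, split x = inr p /\ pvx x = n' + p).
    rewrite /pvx; case: (split x) => [j|p]; [left; by exists j|right; by exists p].
  have lt (c : I) p : pos c <> n' + p by move=> e0; move: (pos_lt c); rewrite e0 ltnNge leq_addr.
  move=> [x|[i j]] [x'|[i' j']] /=.
  - case: (hx x) => [[j [sx ->]]|[p [sx ->]]]; case: (hx x') => [[j' [sx' ->]]|[p' [sx' ->]]].
    + by move/pos_inj => -[e0]; congr inl; rewrite -(splitK x) -(splitK x') sx sx' e0.
    + by move/lt.
    + by move/esym/lt.
    + by move/eqP; rewrite eqn_add2l => /eqP e0; congr inl; rewrite -(splitK x) -(splitK x') sx sx'; congr unsplit; congr inr; exact: val_inj.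
  - case: (hx x) => [[j0 [_ ->]]|[p [_ ->]]]; last by move/esym/lt.
    by move/pos_inj => -[] e0; move: e0; rewrite /bump.
  - case: (hx x') => [[j0 [_ ->]]|[p [_ ->]]]; last by move/lt.
    by move/pos_inj => -[] e0; move: e0; rewrite /bump.
  - move/pos_inj => -[] ei ej; have ei' : i = i' by apply: val_inj; move: ei; rewrite !add0n.
    by subst i' j'.
pose P := @PForm L k (n + B.+1) (fun _ => n) pvx pvy phi fr inj.
have fin : forall l, pat N P 'I_l.
  move=> l.
  have [_ [_ [Huniv _]]] := HG.
  have [g [ginj Hg]] := Huniv (Vt k l) (@Rc k l) (@Rc_hyp k l).
  exists (fun i t j => tau (g (inl (i, t))) j) => S.
  pose S' := [set s : {ffun 'I_k -> 'I_l} | decide (S s)].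
  exists (fun x => match split x with inl j => tau (g (inr S')) j | inr p => e (n' + p) end) => s E Hx Hy.
  pose sf := finfun s.
  pose zt (p : 'I_k.+1) := g (canon S' sf p).
  have -> : sat E phi <-> sat (tuple_env (fun q : I => tau (zt q.1) q.2) e) phi.
    apply: sat_free => v /free_maxvar vB; case: (ltnP v n') => [vn|nv].
      pose c := enum_val (Ordinal vn : 'I_#|{: I}|).
      have pc : pos c = v by rewrite /pos /c enum_valK.
      rewrite -pc tuple_env_pos; case: c pc => r j pc; case: (unliftP ord0 r) => [i ->|->].
        have := Hy i j => /= ->; by rewrite /zt /canon liftK ffunE.
      have := Hx (lshift B.+1 j); rewrite /= /pvx sl => ->.
      by rewrite /zt /canon unlift_none.
    have pB : v - n' < B.+1 by rewrite ltnS leq_subLR (leq_trans vB) // leq_addl.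
    have := Hx (rshift n (Ordinal pB)); rewrite /= /pvx sr /= subnKC // => ->.
    by rewrite tuple_env_big.
  rewrite -HY -HX /X /=.
  have ef : (sf : _ -> _) = s by apply: functional_extensionality => i; rewrite ffunE.
  have H' := Hg (canon S' sf); rewrite Rc_canon inE ef in H'.
  split=> h; first by apply/decideP; apply/H'; exact: h.
  apply/H'; apply/decideP; exact: h.
have [N' [MN' HN']] := @stretch L T N (fun _ : nat => P) MN (fun _ => fin) nat.
exists N', phi; split=> //; exact: (has_kIP_of_pat (HN' 0)).
Qed.

Theorem proposition2p15 (L : signature) (T : theory L) :
  complete_theory T ->
  ((forall (L' : signature) (M : structure L'), theory_locally_trace_defines T M)
     <-> infinite_IP T) /\
  (infinite_IP T <->
     (forall k : nat, 2 <= k ->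
        forall H : structure (hypergraph_sig k), generic_hypergraph H ->
          theory_trace_defines T H)).
Proof.
move=> CT; split; split.
- exact: LTD_to_IP.
- exact: IP_to_LTD CT.
- exact: IP_to_TD.
- exact: TD_to_IP.
Qed.
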